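(* Let $d<\infty$, let $V\subset\mathbb{B}_d$ be an analytic disc attached to the unit sphere and $f$ its embedding map. Suppose $f(\xi)=f(\zeta)$ for two distinct $\xi,\zeta\in\mathbb{T}$. If $h\in\mathcal{H}_f$ extends continuously to $\overline{\mathbb{D}}$, then $h(\xi)=h(\zeta)$.
   Context: $\mathbb{D}$ is the open unit disc, $\mathbb{T}$ the unit circle, $\mathbb{B}_d$ the open unit ball of $\mathbb{C}^d$. The Drury–Arveson space $H^2_d$ is the RKHS on $\mathbb{B}_d$ with kernel $1/(1-\langle z,w\rangle)$, with multiplier algebra $\mathcal{M}_d$. A variety is a common zero set in $\mathbb{B}_d$ of a family of functions from $\mathcal{M}_d$. An analytic disc attached to the unit sphere is a variety $V\subset\mathbb{B}_d$ ($d<\infty$) for which there is an injective analytic $f:\mathbb{D}\to\mathbb{B}_d$ with $f'(z)\neq0$ on $\mathbb{D}$, $V=f(\mathbb{D})$, $f$ extends to a $C^2$ map on $\overline{\mathbb{D}}$, and for $x\in\overline{\mathbb{D}}$, $\|f(x)\|=1$ iff $|x|=1$ ($f$ is the embedding map). $\mathcal{H}_f$ is the RKHS on $\mathbb{D}$ with kernel $k^f(z,w)=1/(1-\langle f(z),f(w)\rangle)$. *)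

(* Defs.v *)
From Stdlib Require Import Reals List.
From Coquelicot Require Import Coquelicot.
Import ListNotations.

Local Notation CC := Complex.C.
Local Open Scope R_scope.

Fixpoint csum (n : nat) (g : nat -> CC) : CC :=
  match n with
  | O => RtoC 0
  | S m => Cplus (csum m g) (g m)
  end.

(* Points of C^d are represented by  z : nat -> C  with  z i = 0  for  i >= d. *)
Definition inner (d : nat) (z w : nat -> CC) : CC :=
  csum d (fun i => Cmult (z i) (Cconj (w i))).

Definition vnorm (d : nat) (z : nat -> CC) : R := sqrt (Re (inner d z z)).

Definition in_Cd (d : nat) (z : nat -> CC) : Prop :=
  forall i, (d <= i)%nat -> z i = RtoC 0.

Definition ball_d (d : nat) (z : nat -> CC) : Prop := in_Cd d z /\ vnorm d z < 1.

Definition udisc (z : CC) : Prop := Cmod z < 1.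
Definition cudisc (z : CC) : Prop := Cmod z <= 1.

(* a finite linear combination  sum_p c_p K(., w_p)  is a list of pairs (c_p, w_p) *)
Definition kcomb (X : Type) := list (CC * X).

Definition keval {X : Type} (K : X -> X -> CC) (s : kcomb X) (z : X) : CC :=
  fold_right (fun p acc => Cplus acc (Cmult (fst p) (K z (snd p)))) (RtoC 0) s.

Definition knormsq {X : Type} (K : X -> X -> CC) (s : kcomb X) : R :=
  Re (fold_right (fun p acc =>
        Cplus acc (fold_right (fun q acc' =>
           Cplus acc' (Cmult (Cmult (fst p) (Cconj (fst q))) (K (snd q) (snd p))))
           (RtoC 0) s)) (RtoC 0) s).

Definition kneg {X : Type} (s : kcomb X) : kcomb X :=
  map (fun p => (Copp (fst p), snd p)) s.

(* h belongs to the RKHS H(K) on Dom: it is the pointwise limit on Dom of a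
   sequence of finite combinations of kernel functions (centred in Dom) which is
   Cauchy for the kernel norm (the standard completion construction). *)
Definition in_RKHS {X : Type} (Dom : X -> Prop) (K : X -> X -> CC) (h : X -> CC) : Prop :=
  exists s : nat -> kcomb X,
    (forall n, List.Forall (fun p => Dom (snd p)) (s n)) /\
    (forall eps, 0 < eps -> exists N, forall m n, (N <= m)%nat -> (N <= n)%nat ->
        knormsq K (s m ++ kneg (s n)) < eps) /\
    (forall z, Dom z -> forall eps, 0 < eps -> exists N, forall n, (N <= n)%nat ->
        Cmod (Cminus (keval K (s n) z) (h z)) < eps).

Definition DA_kernel (d : nat) (z w : nat -> CC) : CC :=
  Cinv (Cminus (RtoC 1) (inner d z w)).

Definition in_H2d (d : nat) (g : (nat -> CC) -> CC) : Prop :=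
  in_RKHS (ball_d d) (DA_kernel d) g.

Definition multiplier (d : nat) (phi : (nat -> CC) -> CC) : Prop :=
  forall g, in_H2d d g -> in_H2d d (fun z => Cmult (phi z) (g z)).

Definition is_variety (d : nat) (V : (nat -> CC) -> Prop) : Prop :=
  exists S : ((nat -> CC) -> CC) -> Prop,
    (forall phi, S phi -> multiplier d phi) /\
    (forall z, V z <-> (ball_d d z /\ forall phi, S phi -> phi z = RtoC 0)).

Definition cont_on_cdisc (g : CC -> CC) : Prop :=
  forall z, cudisc z -> forall eps, 0 < eps -> exists delta, 0 < delta /\
    forall w, cudisc w -> Cmod (Cminus w z) < delta -> Cmod (Cminus (g w) (g z)) < eps.

Definition is_pdx (g : CC -> CC) (z l : CC) : Prop :=
  is_derive (fun t : R => g (Cplus z (RtoC t))) 0 l.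
Definition is_pdy (g : CC -> CC) (z l : CC) : Prop :=
  is_derive (fun t : R => g (Cplus z (Cmult (RtoC t) Ci))) 0 l.

Definition C2_on_cdisc (g : CC -> CC) : Prop :=
  exists gx gy gxx gxy gyx gyy : CC -> CC,
    (forall z, udisc z ->
       is_pdx g z (gx z) /\ is_pdy g z (gy z) /\
       is_pdx gx z (gxx z) /\ is_pdy gx z (gxy z) /\
       is_pdx gy z (gyx z) /\ is_pdy gy z (gyy z)) /\
    cont_on_cdisc g /\ cont_on_cdisc gx /\ cont_on_cdisc gy /\
    cont_on_cdisc gxx /\ cont_on_cdisc gxy /\ cont_on_cdisc gyx /\ cont_on_cdisc gyy.

(* V is an analytic udisc attached to the unit sphere, with embedding map f
   (f is given on all of C; its values on the closed udisc are the C^2 extension). *)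
Definition analytic_disc_attached (d : nat) (V : (nat -> CC) -> Prop)
    (f : CC -> nat -> CC) : Prop :=
  is_variety d V /\
  (forall x, in_Cd d (f x)) /\
  (forall x, udisc x -> ball_d d (f x)) /\
  (forall x y, udisc x -> udisc y -> f x = f y -> x = y) /\
  (forall x i, udisc x -> ex_derive (fun y : CC => f y i) x) /\
  (forall x, udisc x -> exists i, (i < d)%nat /\ C_derive (fun y => f y i) x <> RtoC 0) /\
  (forall z, V z <-> exists x, udisc x /\ z = f x) /\
  (forall i, (i < d)%nat -> C2_on_cdisc (fun x => f x i)) /\
  (forall x, cudisc x -> (vnorm d (f x) = 1 <-> Cmod x = 1)).

Definition kf (d : nat) (f : CC -> nat -> CC) (z w : CC) : CC :=
  Cinv (Cminus (RtoC 1) (inner d (f z) (f w))).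

Definition in_Hf (d : nat) (f : CC -> nat -> CC) (h : CC -> CC) : Prop :=
  in_RKHS udisc (kf d f) h.

(* Main.v *)
Require Import Defs.
From Stdlib Require Import Reals Lra Lia Psatz List Classical ClassicalEpsilon.
From Coquelicot Require Import Coquelicot.
Import ListNotations.
Local Notation CC := Complex.C.
Local Open Scope R_scope.

Lemma deriv_eps {K : AbsRing} {V : NormedModule K} (f : K -> V) x l :
  is_derive f x l <-> forall eps : posreal, exists delta : posreal, forall y,
    norm (minus y x) < delta ->
    norm (minus (minus (f y) (f x)) (scal (minus y x) l)) <= eps * norm (minus y x).
Proof.
split.
- intros [_ H] eps. specialize (H x (fun P HP => HP) eps). destruct H as [e He].
  exists e. intros y Hy. apply He. apply (norm_compat1 (V := AbsRing_NormedModule K)). exact Hy.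
- intros H. split. apply is_linear_scal_l. intros x' Hx'.
  apply (is_filter_lim_locally_unique (V := AbsRing_NormedModule K)) in Hx'. subst x'. intros eps.
  destruct (H eps) as [dl Hd].
  assert (Hp : 0 < dl / norm_factor (V := AbsRing_NormedModule K)).
  { apply Rdiv_lt_0_compat. apply cond_pos. apply norm_factor_gt_0. }
  exists (mkposreal _ Hp). intros y Hy. apply Hd. apply (norm_compat2 (V := AbsRing_NormedModule K)) in Hy. simpl in Hy.
  replace (pos dl) with (norm_factor (V := AbsRing_NormedModule K) * (dl / norm_factor (V := AbsRing_NormedModule K))).
  exact Hy. field. apply Rgt_not_eq, norm_factor_gt_0.
Qed.

Lemma normC_R (z : CC) : @norm R_AbsRing C_R_NormedModule z = Cmod z.
Proof.
  unfold norm; simpl. unfold prod_norm; simpl. unfold Cmod. f_equal.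
  unfold norm; simpl. unfold abs; simpl. rewrite !Rmult_1_r.
  rewrite <- !Rabs_mult. rewrite !Rabs_right; try nra.
Qed.

Lemma dRC_iff (F : R -> CC) t l : is_derive F t l <->
  forall eps, 0 < eps -> exists delta, 0 < delta /\ forall y, Rabs (y - t) < delta ->
    Cmod (Cminus (Cminus (F y) (F t)) (Cmult (RtoC (y - t)) l)) <= eps * Rabs (y - t).
Proof.
  rewrite deriv_eps. split.
  - intros H eps He. destruct (H (mkposreal _ He)) as [dl Hd]. exists dl. split. apply cond_pos.
    intros y Hy. specialize (Hd y Hy). rewrite normC_R in Hd. rewrite scal_R_Cmult in Hd.
    exact Hd.
  - intros H eps. destruct (H eps (cond_pos eps)) as [dl [Hdl Hd]]. exists (mkposreal _ Hdl).
    intros y Hy. rewrite normC_R, scal_R_Cmult. apply Hd. exact Hy.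
Qed.

Lemma dCC_iff (g : CC -> CC) z l : is_derive g z l <->
  forall eps, 0 < eps -> exists delta, 0 < delta /\ forall y, Cmod (Cminus y z) < delta ->
    Cmod (Cminus (Cminus (g y) (g z)) (Cmult (Cminus y z) l)) <= eps * Cmod (Cminus y z).
Proof.
  rewrite deriv_eps. split.
  - intros H eps He. destruct (H (mkposreal _ He)) as [dl Hd]. exists dl. split. apply cond_pos.
    intros y Hy. exact (Hd y Hy).
  - intros H eps. destruct (H eps (cond_pos eps)) as [dl [Hdl Hd]]. exists (mkposreal _ Hdl).
    intros y Hy. apply Hd. exact Hy.
Qed.

Lemma dRR_iff (F : R -> R) t l : is_derive F t l <->
  forall eps, 0 < eps -> exists delta, 0 < delta /\ forall y, Rabs (y - t) < delta ->
    Rabs (F y - F t - (y - t) * l) <= eps * Rabs (y - t).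
Proof.
  rewrite deriv_eps. split.
  - intros H eps He. destruct (H (mkposreal _ He)) as [dl Hd]. exists dl. split. apply cond_pos.
    intros y Hy. exact (Hd y Hy).
  - intros H eps. destruct (H eps (cond_pos eps)) as [dl [Hdl Hd]]. exists (mkposreal _ Hdl).
    intros y Hy. apply Hd. exact Hy.
Qed.

Lemma im_le_Cmod' (z : CC) : Rabs (Im z) <= Cmod z.
Proof.
  unfold Cmod. rewrite <- sqrt_Rsqr_abs. apply sqrt_le_1_alt. unfold Rsqr. simpl.
  destruct z as [x y]. simpl. nra.
Qed.

Lemma Cmod_le_ReIm (z : CC) : Cmod z <= Rabs (Re z) + Rabs (Im z).
Proof.
  unfold Cmod. destruct z as [x y]. simpl.
  rewrite <- (sqrt_Rsqr (Rabs x + Rabs y)).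
  2: { pose proof (Rabs_pos x); pose proof (Rabs_pos y); lra. }
  apply sqrt_le_1_alt. unfold Rsqr.
  pose proof (Rabs_pos x); pose proof (Rabs_pos y).
  assert (x * x = Rabs x * Rabs x) by (rewrite <- Rabs_mult; rewrite Rabs_right; nra).
  assert (y * y = Rabs y * Rabs y) by (rewrite <- Rabs_mult; rewrite Rabs_right; nra).
  nra.
Qed.

Lemma cont_pt_eps (f : R -> R) x0 :
  (forall eps, 0 < eps -> exists delta, 0 < delta /\ forall x, Rabs (x - x0) < delta -> Rabs (f x - f x0) < eps) ->
  continuity_pt f x0.
Proof.
  intros H. unfold continuity_pt, continue_in, limit1_in, limit_in. intros eps He.
  destruct (H eps He) as [d [Hd Hd']]. exists d. split. lra. intros x [_ Hx].
  simpl in *. unfold R_dist in *. apply Hd'. exact Hx.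
Qed.

Lemma dRC_Re (F : R -> CC) t l : is_derive F t l -> is_derive (fun s => Re (F s)) t (Re l).
Proof.
  rewrite dRC_iff, dRR_iff. intros H eps He. destruct (H eps He) as [d [Hd H']].
  exists d. split. exact Hd. intros y Hy. eapply Rle_trans. 2: apply H'; exact Hy.
  eapply Rle_trans. 2: apply re_le_Cmod. right. f_equal. destruct (F y), (F t), l. simpl. ring.
Qed.

Lemma dRC_Im (F : R -> CC) t l : is_derive F t l -> is_derive (fun s => Im (F s)) t (Im l).
Proof.
  rewrite dRC_iff, dRR_iff. intros H eps He. destruct (H eps He) as [d [Hd H']].
  exists d. split. exact Hd. intros y Hy. eapply Rle_trans. 2: apply H'; exact Hy.
  eapply Rle_trans. 2: apply im_le_Cmod'. right. f_equal. destruct (F y), (F t), l. simpl. ring.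
Qed.

Lemma C_ext (a b : CC) : Re a = Re b -> Im a = Im b -> a = b.
Proof. destruct a, b. simpl. intros; subst; auto. Qed.

Ltac cext := apply C_ext; simpl; unfold Re, Im; simpl; ring.

Lemma dRC_unique (F : R -> CC) t l1 l2 : is_derive F t l1 -> is_derive F t l2 -> l1 = l2.
Proof.
  intros H1 H2. apply C_ext.
  - apply dRC_Re in H1. apply dRC_Re in H2. apply is_derive_unique in H1. apply is_derive_unique in H2. congruence.
  - apply dRC_Im in H1. apply dRC_Im in H2. apply is_derive_unique in H1. apply is_derive_unique in H2. congruence.
Qed.

Lemma is_derive_lin (c s : R) : is_derive (fun t : R => t * c) s c.
Proof. auto_derive. auto. ring. Qed.

Definition rcont (phi : R -> CC) (a b : R) : Prop :=
  forall s, a <= s <= b -> forall eps, 0 < eps -> exists delta, 0 < delta /\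
    forall t, a <= t <= b -> Rabs (t - s) < delta -> Cmod (Cminus (phi t) (phi s)) < eps.

Definition clamp (a b t : R) : R := Rmax a (Rmin b t).

Lemma clamp_in a b t : a <= b -> a <= clamp a b t <= b.
Proof. intros. unfold clamp. unfold Rmax, Rmin. repeat destruct Rle_dec; lra. Qed.

Lemma clamp_id a b t : a <= t <= b -> clamp a b t = t.
Proof. intros. unfold clamp. unfold Rmax, Rmin. repeat destruct Rle_dec; lra. Qed.

Lemma clamp_lip a b t s : a <= b -> Rabs (clamp a b t - clamp a b s) <= Rabs (t - s).
Proof. intros. unfold clamp. unfold Rmax, Rmin. repeat destruct Rle_dec; unfold Rabs; repeat destruct Rcase_abs; lra. Qed.

Lemma MVT_R (g g' : R -> R) a b M : a < b ->
  (forall s, a < s < b -> is_derive g s (g' s)) ->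
  (forall s, a <= s <= b -> forall eps, 0 < eps -> exists delta, 0 < delta /\
    forall t, a <= t <= b -> Rabs (t - s) < delta -> Rabs (g t - g s) < eps) ->
  (forall s, a < s < b -> Rabs (g' s) <= M) ->
  Rabs (g b - g a) <= M * (b - a).
Proof.
  intros Hab Hd Hc HM.
  set (G := fun t => g (clamp a b t)).
  set (dG := fun t => match Rlt_dec a t with left _ => match Rlt_dec t b with left _ => g' t | right _ => 0 end | right _ => 0 end).
  assert (HM0 : 0 <= M). { assert (a < (a+b)/2 < b) by lra. specialize (HM _ H). pose proof (Rabs_pos (g' ((a+b)/2))). lra. }
  destruct (MVT_gen G a b dG) as [c [Hc1 Hc2]].
  - rewrite Rmin_left, Rmax_right by lra. intros x Hx. unfold dG.
    destruct (Rlt_dec a x); [|lra]. destruct (Rlt_dec x b); [|lra].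
    apply is_derive_ext_loc with g. 2: apply Hd; lra.
    assert (Hp : 0 < Rmin (x - a) (b - x)) by (apply Rmin_pos; lra).
    exists (mkposreal _ Hp). intros y Hy. unfold G. rewrite clamp_id. auto.
    unfold ball in Hy; simpl in Hy; unfold AbsRing_ball, abs, minus, plus, opp in Hy; simpl in Hy.
    assert (Rabs (y - x) < Rmin (x - a) (b - x)) by exact Hy.
    pose proof (Rmin_l (x-a) (b-x)); pose proof (Rmin_r (x-a) (b-x)).
    unfold Rabs in H; destruct Rcase_abs in H; lra.
  - rewrite Rmin_left, Rmax_right by lra. intros x Hx. apply cont_pt_eps. intros eps He.
    destruct (Hc (clamp a b x) (clamp_in a b x ltac:(lra)) eps He) as [d [Hd0 Hd1]].
    exists d. split. exact Hd0. intros y Hy. unfold G. apply Hd1. apply clamp_in; lra.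
    eapply Rle_lt_trans. apply clamp_lip; lra. exact Hy.
  - rewrite Rmin_left, Rmax_right in Hc1 by lra.
    unfold G in Hc2. rewrite !clamp_id in Hc2 by lra. rewrite Hc2.
    rewrite Rabs_mult. rewrite (Rabs_right (b - a)) by lra.
    apply Rmult_le_compat_r. lra. unfold dG.
    destruct (Rlt_dec a c); [|rewrite Rabs_R0; lra]. destruct (Rlt_dec c b); [|rewrite Rabs_R0; lra].
    apply HM. lra.
Qed.

Lemma MVT_C (phi phi' : R -> CC) a b L M : a < b ->
  (forall s, a < s < b -> is_derive phi s (phi' s)) ->
  rcont phi a b ->
  (forall s, a < s < b -> Cmod (Cminus (phi' s) L) <= M) ->
  Cmod (Cminus (Cminus (phi b) (phi a)) (Cmult (RtoC (b - a)) L)) <= 2 * M * (b - a).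
Proof.
  intros Hab Hd Hc HM.
  assert (HRe : Rabs (Re (phi b) - b * Re L - (Re (phi a) - a * Re L)) <= M * (b - a)).
  { apply (MVT_R (fun t => Re (phi t) - t * Re L) (fun t => Re (phi' t) - Re L)). exact Hab.
    - intros s Hs. apply (is_derive_minus (fun t => Re (phi t)) (fun t => t * Re L)).
      apply dRC_Re. apply Hd. exact Hs.
      apply is_derive_lin.
    - intros s Hs eps He. destruct (Hc s Hs (eps/2)) as [d1 [Hd1 Hd1']]. lra.
      exists (Rmin d1 (eps / 2 / (Rabs (Re L) + 1))). split.
      apply Rmin_pos. lra. apply Rdiv_lt_0_compat. lra. pose proof (Rabs_pos (Re L)); lra.
      intros t Ht Hts. specialize (Hd1' t Ht (Rlt_le_trans _ _ _ Hts (Rmin_l _ _))).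
      pose proof (Rmin_r d1 (eps / 2 / (Rabs (Re L) + 1))).
      assert (Hre : Rabs (Re (phi t) - Re (phi s)) < eps / 2).
      { eapply Rle_lt_trans. 2: exact Hd1'. eapply Rle_trans. 2: apply re_le_Cmod. right. f_equal.
        all: try (destruct (phi t), (phi s); simpl; ring). }
      replace (Re (phi t) - t * Re L - (Re (phi s) - s * Re L)) with ((Re (phi t) - Re (phi s)) - (t - s) * Re L) by ring.
      eapply Rle_lt_trans. apply Rabs_triang. rewrite Rabs_Ropp, Rabs_mult.
      assert (Rabs (t - s) * Rabs (Re L) <= eps / 2).
      { assert (H1 : Rabs (t - s) < eps / 2 / (Rabs (Re L) + 1)) by lra.
        assert (Rabs (t-s) * (Rabs (Re L) + 1) <= eps/2).
        { apply Rlt_le in H1. apply Rmult_le_compat_r with (r := Rabs (Re L) + 1) in H1.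
          unfold Rdiv in H1. rewrite Rmult_assoc, Rinv_l in H1. lra. pose proof (Rabs_pos (Re L)); lra.
          pose proof (Rabs_pos (Re L)); lra. }
        pose proof (Rabs_pos (t - s)). nra. }
      lra.
    - intros s Hs. eapply Rle_trans. 2: apply HM; exact Hs. eapply Rle_trans. 2: apply re_le_Cmod.
      right. f_equal. all: try (destruct (phi' s), L; simpl; ring). }
  assert (HIm : Rabs (Im (phi b) - b * Im L - (Im (phi a) - a * Im L)) <= M * (b - a)).
  { apply (MVT_R (fun t => Im (phi t) - t * Im L) (fun t => Im (phi' t) - Im L)). exact Hab.
    - intros s Hs. apply (is_derive_minus (fun t => Im (phi t)) (fun t => t * Im L)).
      apply dRC_Im. apply Hd. exact Hs.
      apply is_derive_lin.
    - intros s Hs eps He. destruct (Hc s Hs (eps/2)) as [d1 [Hd1 Hd1']]. lra.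
      exists (Rmin d1 (eps / 2 / (Rabs (Im L) + 1))). split.
      apply Rmin_pos. lra. apply Rdiv_lt_0_compat. lra. pose proof (Rabs_pos (Im L)); lra.
      intros t Ht Hts. specialize (Hd1' t Ht (Rlt_le_trans _ _ _ Hts (Rmin_l _ _))).
      pose proof (Rmin_r d1 (eps / 2 / (Rabs (Im L) + 1))).
      assert (Hre : Rabs (Im (phi t) - Im (phi s)) < eps / 2).
      { eapply Rle_lt_trans. 2: exact Hd1'. eapply Rle_trans. 2: apply im_le_Cmod'. right. f_equal.
        all: try (destruct (phi t), (phi s); simpl; ring). }
      replace (Im (phi t) - t * Im L - (Im (phi s) - s * Im L)) with ((Im (phi t) - Im (phi s)) - (t - s) * Im L) by ring.
      eapply Rle_lt_trans. apply Rabs_triang. rewrite Rabs_Ropp, Rabs_mult.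
      assert (Rabs (t - s) * Rabs (Im L) <= eps / 2).
      { assert (H1 : Rabs (t - s) < eps / 2 / (Rabs (Im L) + 1)) by lra.
        assert (Rabs (t-s) * (Rabs (Im L) + 1) <= eps/2).
        { apply Rlt_le in H1. apply Rmult_le_compat_r with (r := Rabs (Im L) + 1) in H1.
          unfold Rdiv in H1. rewrite Rmult_assoc, Rinv_l in H1. lra. pose proof (Rabs_pos (Im L)); lra.
          pose proof (Rabs_pos (Im L)); lra. }
        pose proof (Rabs_pos (t - s)). nra. }
      lra.
    - intros s Hs. eapply Rle_trans. 2: apply HM; exact Hs. eapply Rle_trans. 2: apply im_le_Cmod'.
      right. f_equal. all: try (destruct (phi' s), L; simpl; ring). }
  eapply Rle_trans. apply Cmod_le_ReIm.
  replace (Re (Cminus (Cminus (phi b) (phi a)) (Cmult (RtoC (b - a)) L))) with (Re (phi b) - b * Re L - (Re (phi a) - a * Re L)).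
  replace (Im (Cminus (Cminus (phi b) (phi a)) (Cmult (RtoC (b - a)) L))) with (Im (phi b) - b * Im L - (Im (phi a) - a * Im L)).
  lra.
  destruct (phi b), (phi a), L; simpl; ring.
  destruct (phi b), (phi a), L; simpl; ring.
Qed.

Lemma Cmod_RtoC_mult (r : R) (z : CC) : Cmod (Cmult (RtoC r) z) = Rabs r * Cmod z.
Proof. rewrite Cmod_mult, Cmod_R. reflexivity. Qed.

Lemma dline (g : CC -> CC) u D t l :
  is_derive g (Cplus u (Cmult (RtoC t) D)) l ->
  is_derive (fun s : R => g (Cplus u (Cmult (RtoC s) D))) t (Cmult D l).
Proof.
  rewrite dCC_iff, dRC_iff. intros H eps He.
  destruct (H (eps / (Cmod D + 1))) as [d [Hd H']].
  { apply Rdiv_lt_0_compat. lra. pose proof (Cmod_ge_0 D); lra. }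
  exists (d / (Cmod D + 1)). split. apply Rdiv_lt_0_compat. lra. pose proof (Cmod_ge_0 D); lra.
  intros y Hy.
  assert (E : Cminus (Cplus u (Cmult (RtoC y) D)) (Cplus u (Cmult (RtoC t) D)) = Cmult (RtoC (y - t)) D).
  { rewrite RtoC_minus. ring. }
  assert (HD := Cmod_ge_0 D).
  assert (Hlt : Cmod (Cminus (Cplus u (Cmult (RtoC y) D)) (Cplus u (Cmult (RtoC t) D))) < d).
  { rewrite E, Cmod_RtoC_mult.
    apply Rmult_lt_compat_r with (r := Cmod D + 1) in Hy. 2: lra.
    unfold Rdiv in Hy. rewrite Rmult_assoc, Rinv_l in Hy by lra.
    pose proof (Rabs_pos (y - t)). nra. }
  specialize (H' _ Hlt). rewrite E in H'.
  replace (Cmult (Cmult (RtoC (y - t)) D) l) with (Cmult (RtoC (y - t)) (Cmult D l)) in H' by ring.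
  eapply Rle_trans. exact H'. rewrite Cmod_RtoC_mult.
  assert (eps / (Cmod D + 1) * (Rabs (y - t) * Cmod D) <= eps * Rabs (y - t)).
  { unfold Rdiv. pose proof (Rabs_pos (y - t)).
    assert (/ (Cmod D + 1) * Cmod D <= 1).
    { apply Rmult_le_reg_l with (Cmod D + 1). lra. rewrite <- Rmult_assoc, Rinv_r by lra. lra. }
    assert (0 < / (Cmod D + 1)) by (apply Rinv_0_lt_compat; lra).
    replace (eps * / (Cmod D + 1) * (Rabs (y - t) * Cmod D)) with (eps * Rabs (y - t) * (/ (Cmod D + 1) * Cmod D)) by ring.
    assert (0 <= eps * Rabs (y - t)) by nra. nra. }
  exact H0.
Qed.

Lemma pd_shift (G : CC -> CC) c D s0 l :
  is_derive (fun t : R => G (Cplus (Cplus c (Cmult (RtoC s0) D)) (Cmult (RtoC t) D))) 0 l ->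
  is_derive (fun s : R => G (Cplus c (Cmult (RtoC s) D))) s0 l.
Proof.
  rewrite !dRC_iff. intros H eps He. destruct (H eps He) as [d [Hd H']]. exists d. split; auto.
  intros y Hy. specialize (H' (y - s0)). rewrite Rminus_0_r in H'. specialize (H' Hy).
  replace (Cplus (Cplus c (Cmult (RtoC s0) D)) (Cmult (RtoC (y - s0)) D)) with (Cplus c (Cmult (RtoC y) D)) in H'.
  replace (Cplus (Cplus c (Cmult (RtoC s0) D)) (Cmult (RtoC 0) D)) with (Cplus c (Cmult (RtoC s0) D)) in H'.
  exact H'. ring. rewrite RtoC_minus. ring.
Qed.

Lemma pdx_line (G : CC -> CC) c s0 l :
  is_pdx G (Cplus c (RtoC s0)) l -> is_derive (fun s : R => G (Cplus c (RtoC s))) s0 l.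
Proof.
  unfold is_pdx. intros H.
  apply (is_derive_ext (fun s : R => G (Cplus c (Cmult (RtoC s) (RtoC 1))))).
  { intros t. f_equal. f_equal. rewrite Cmult_1_r. reflexivity. }
  apply pd_shift. eapply is_derive_ext. 2: exact H. intros t. simpl. f_equal. rewrite !Cmult_1_r. reflexivity.
Qed.

Lemma pdy_line (G : CC -> CC) c s0 l :
  is_pdy G (Cplus c (Cmult (RtoC s0) Ci)) l -> is_derive (fun s : R => G (Cplus c (Cmult (RtoC s) Ci))) s0 l.
Proof. unfold is_pdy. intros H. apply pd_shift. exact H. Qed.

Lemma holo_pd (g : CC -> CC) (u l : CC) : is_derive g u l -> is_pdx g u l /\ is_pdy g u (Cmult Ci l).
Proof.
  intros H. split.
  - unfold is_pdx. apply (is_derive_ext (fun s : R => g (Cplus u (Cmult (RtoC s) (RtoC 1))))).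
    { intros t. rewrite Cmult_1_r. reflexivity. }
    assert (H2 : is_derive g (Cplus u (Cmult (RtoC 0) (RtoC 1))) l).
    { replace (Cplus u (Cmult (RtoC 0) (RtoC 1))) with u. exact H. change (u = Cplus u (Cmult (RtoC 0) (RtoC 1))). ring. }
    apply dline in H2. rewrite Cmult_1_l in H2. exact H2.
  - unfold is_pdy. apply dline. replace (Cplus u (Cmult (RtoC 0) Ci)) with u. exact H. change (u = Cplus u (Cmult (RtoC 0) Ci)). ring.
Qed.

Lemma deriv_rcont (phi phi' : R -> CC) a b :
  (forall s, a <= s <= b -> is_derive phi s (phi' s)) -> rcont phi a b.
Proof.
  intros H s Hs eps He. specialize (H s Hs). rewrite dRC_iff in H. destruct (H 1 ltac:(lra)) as [d [Hd H']].
  exists (Rmin d (eps / (Cmod (phi' s) + 2))). split.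
  apply Rmin_pos. lra. apply Rdiv_lt_0_compat. lra. pose proof (Cmod_ge_0 (phi' s)); lra.
  intros t Ht Hts. pose proof (Rmin_l d (eps / (Cmod (phi' s) + 2))). pose proof (Rmin_r d (eps / (Cmod (phi' s) + 2))).
  specialize (H' t ltac:(lra)).
  assert (E : Cminus (phi t) (phi s) = Cplus (Cminus (Cminus (phi t) (phi s)) (Cmult (RtoC (t - s)) (phi' s))) (Cmult (RtoC (t - s)) (phi' s))) by ring.
  rewrite E. eapply Rle_lt_trans. apply Cmod_triangle. rewrite Cmod_RtoC_mult.
  pose proof (Cmod_ge_0 (phi' s)). pose proof (Rabs_pos (t - s)).
  assert (Rabs (t - s) * (Cmod (phi' s) + 2) < eps).
  { assert (H5 : Rabs (t - s) < eps / (Cmod (phi' s) + 2)) by lra.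
    apply Rmult_lt_compat_r with (r := Cmod (phi' s) + 2) in H5. 2: lra.
    unfold Rdiv in H5. rewrite Rmult_assoc, Rinv_l in H5 by lra. lra. }
  nra.
Qed.

Lemma MVT_C2 (phi phi' : R -> CC) a b L M :
  (forall s, Rmin a b <= s <= Rmax a b -> is_derive phi s (phi' s)) ->
  (forall s, Rmin a b <= s <= Rmax a b -> Cmod (Cminus (phi' s) L) <= M) ->
  Cmod (Cminus (Cminus (phi b) (phi a)) (Cmult (RtoC (b - a)) L)) <= 2 * M * Rabs (b - a).
Proof.
  intros Hd HM. destruct (Rtotal_order a b) as [Hab | [Hab | Hab]].
  - rewrite Rmin_left, Rmax_right in * by lra. rewrite Rabs_right by lra.
    apply MVT_C with phi'. exact Hab. intros; apply Hd; lra.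
    apply deriv_rcont with phi'. exact Hd. intros; apply HM; lra.
  - subst b. replace (Cminus (Cminus (phi a) (phi a)) (Cmult (RtoC (a - a)) L)) with (RtoC 0).
    rewrite Cmod_0. rewrite Rminus_eq_0, Rabs_R0. lra. rewrite Rminus_eq_0. ring.
  - rewrite Rmin_right, Rmax_left in * by lra. rewrite Rabs_left by lra.
    assert (H := MVT_C phi phi' b a L M Hab ltac:(intros; apply Hd; lra) (deriv_rcont phi phi' b a Hd) ltac:(intros; apply HM; lra)).
    replace (Cminus (Cminus (phi b) (phi a)) (Cmult (RtoC (b - a)) L)) with (Copp (Cminus (Cminus (phi a) (phi b)) (Cmult (RtoC (a - b)) L))).
    rewrite Cmod_opp. lra. rewrite !RtoC_minus. ring.
Qed.


Definition pt (u : CC) (s t : R) : CC := Cplus u (Cplus (RtoC s) (Cmult (RtoC t) Ci)).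

Lemma pt_00 u : pt u 0 0 = u.
Proof. unfold pt. cext. Qed.

Lemma pt_dist u s t : Cmod (Cminus (pt u s t) u) <= Rabs s + Rabs t.
Proof.
  eapply Rle_trans. apply Cmod_le_ReIm.
  replace (Re (Cminus (pt u s t) u)) with s by (unfold pt, Re; simpl; ring).
  replace (Im (Cminus (pt u s t) u)) with t by (unfold pt, Im; simpl; ring). lra.
Qed.

Lemma px (G : CC -> CC) l u t s0 : is_pdx G (pt u s0 t) l -> is_derive (fun s => G (pt u s t)) s0 l.
Proof.
  intros H. apply (is_derive_ext (fun s => G (Cplus (Cplus u (Cmult (RtoC t) Ci)) (RtoC s)))).
  { intros s. f_equal. unfold pt. cext. }
  apply pdx_line. replace (Cplus (Cplus u (Cmult (RtoC t) Ci)) (RtoC s0)) with (pt u s0 t). exact H.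
  unfold pt. cext.
Qed.

Lemma py (G : CC -> CC) l u s t0 : is_pdy G (pt u s t0) l -> is_derive (fun t => G (pt u s t)) t0 l.
Proof.
  intros H. apply (is_derive_ext (fun t => G (Cplus (Cplus u (RtoC s)) (Cmult (RtoC t) Ci)))).
  { intros t. f_equal. unfold pt. cext. }
  apply pdy_line. replace (Cplus (Cplus u (RtoC s)) (Cmult (RtoC t0) Ci)) with (pt u s t0). exact H.
  unfold pt. cext.
Qed.

Lemma udisc_nbhd u : udisc u -> forall w, Cmod (Cminus w u) < 1 - Cmod u -> udisc w.
Proof.
  unfold udisc. intros Hu w Hw. replace w with (Cplus u (Cminus w u)) by ring.
  eapply Rle_lt_trans. apply Cmod_triangle. lra.
Qed.

Lemma udisc_cudisc u : udisc u -> cudisc u.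
Proof. unfold udisc, cudisc. lra. Qed.

Lemma cont_at (g : CC -> CC) u : cont_on_cdisc g -> udisc u -> forall eps, 0 < eps ->
  exists delta, 0 < delta /\ forall w, Cmod (Cminus w u) < delta -> Cmod (Cminus (g w) (g u)) < eps.
Proof.
  intros Hg Hu eps He. destruct (Hg u (udisc_cudisc u Hu) eps He) as [d [Hd H]].
  exists (Rmin d (1 - Cmod u)). split. apply Rmin_pos. lra. unfold udisc in Hu; lra.
  intros w Hw. apply H. apply udisc_cudisc. apply (udisc_nbhd u Hu). eapply Rlt_le_trans. exact Hw. apply Rmin_r.
  eapply Rlt_le_trans. exact Hw. apply Rmin_l.
Qed.

Lemma dir_deriv (G A B : CC -> CC) u D :
  udisc u -> (forall w, udisc w -> is_pdx G w (A w)) -> (forall w, udisc w -> is_pdy G w (B w)) ->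
  cont_on_cdisc B ->
  is_derive (fun t : R => G (Cplus u (Cmult (RtoC t) D))) 0
     (Cplus (Cmult (RtoC (Re D)) (A u)) (Cmult (RtoC (Im D)) (B u))).
Proof.
  intros Hu HA HB HBc. rewrite dRC_iff. intros eps He.
  set (e' := eps / (3 * (Cmod D + 1))).
  assert (HD := Cmod_ge_0 D).
  assert (He' : 0 < e') by (unfold e'; apply Rdiv_lt_0_compat; lra).
  assert (HAu := HA u Hu). unfold is_pdx in HAu. rewrite dRC_iff in HAu.
  destruct (HAu e' He') as [d1 [Hd1 H1]].
  destruct (cont_at B u HBc Hu e' He') as [d2 [Hd2 H2]].
  set (r := 1 - Cmod u). assert (Hr : 0 < r) by (unfold r, udisc in *; lra).
  set (m := Rmin d1 (Rmin d2 r)).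
  assert (Hm : 0 < m) by (unfold m; repeat apply Rmin_pos; lra).
  assert (Hm1 : m <= d1) by apply Rmin_l.
  assert (Hm2 : m <= d2) by (eapply Rle_trans; [apply Rmin_r|apply Rmin_l]).
  assert (Hm3 : m <= r) by (eapply Rle_trans; [apply Rmin_r|apply Rmin_r]).
  exists (m / (2 * (Cmod D + 1))). split. apply Rdiv_lt_0_compat; lra.
  intros y Hy. rewrite Rminus_0_r in *.
  set (D1 := Re D). set (D2 := Im D).
  assert (HD1 : Rabs D1 <= Cmod D) by apply re_le_Cmod.
  assert (HD2 : Rabs D2 <= Cmod D) by apply im_le_Cmod'.
  assert (Hy0 := Rabs_pos y).
  assert (Hym : Rabs y * (2 * (Cmod D + 1)) < m).
  { apply Rmult_lt_compat_r with (r := 2 * (Cmod D + 1)) in Hy. 2: lra.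
    unfold Rdiv in Hy. rewrite Rmult_assoc, Rinv_l in Hy by lra. lra. }
  assert (E1 : Cplus u (Cmult (RtoC y) D) = pt u (y * D1) (y * D2)).
  { unfold pt, D1, D2. destruct D. cext. }
  assert (E0 : Cplus u (Cmult (RtoC 0) D) = u) by (cext).
  rewrite E1, E0.
  assert (HV : Cmod (Cminus (Cminus (G (pt u (y * D1) (y * D2))) (G (pt u (y * D1) 0)))
                 (Cmult (RtoC (y * D2 - 0)) (B u))) <= 2 * e' * Rabs (y * D2 - 0)).
  { apply (MVT_C2 (fun t => G (pt u (y * D1) t)) (fun t => B (pt u (y * D1) t))).
    - intros s Hs. apply py. apply HB.
      apply (udisc_nbhd u Hu). eapply Rle_lt_trans. apply pt_dist.
      assert (Rabs s <= Rabs (y * D2)).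
      { unfold Rmin, Rmax in Hs. destruct Rle_dec; unfold Rabs in *; repeat destruct Rcase_abs; lra. }
      rewrite Rabs_mult in *. fold r.
      assert (Rabs y * Rabs D1 <= Rabs y * Cmod D) by (apply Rmult_le_compat_l; lra).
      assert (Rabs y * Rabs D2 <= Rabs y * Cmod D) by (apply Rmult_le_compat_l; lra).
      nra.
    - intros s Hs. left. apply H2.
      eapply Rle_lt_trans. apply pt_dist.
      assert (Rabs s <= Rabs (y * D2)).
      { unfold Rmin, Rmax in Hs. destruct Rle_dec; unfold Rabs in *; repeat destruct Rcase_abs; lra. }
      rewrite Rabs_mult in *.
      assert (Rabs y * Rabs D1 <= Rabs y * Cmod D) by (apply Rmult_le_compat_l; lra).
      assert (Rabs y * Rabs D2 <= Rabs y * Cmod D) by (apply Rmult_le_compat_l; lra).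
      nra. }
  assert (HH : Cmod (Cminus (Cminus (G (Cplus u (RtoC (y * D1)))) (G (Cplus u (RtoC 0))))
               (Cmult (RtoC (y * D1 - 0)) (A u))) <= e' * Rabs (y * D1 - 0)).
  { apply H1. rewrite Rminus_0_r, Rabs_mult.
    assert (Rabs y * Rabs D1 <= Rabs y * Cmod D) by (apply Rmult_le_compat_l; lra). nra. }
  replace (Cplus u (RtoC (y * D1))) with (pt u (y * D1) 0) in HH by (unfold pt; cext).
  replace (Cplus u (RtoC 0)) with u in HH by (cext).
  rewrite Rminus_0_r in HV, HH.
  set (a := G (pt u (y * D1) (y * D2))) in *. set (b := G (pt u (y * D1) 0)) in *.
  replace (Cminus (Cminus a (G u)) (Cmult (RtoC y) (Cplus (Cmult (RtoC D1) (A u)) (Cmult (RtoC D2) (B u)))))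
    with (Cplus (Cminus (Cminus a b) (Cmult (RtoC (y * D2)) (B u))) (Cminus (Cminus b (G u)) (Cmult (RtoC (y * D1)) (A u)))).
  2: { rewrite !RtoC_mult. ring. }
  eapply Rle_trans. apply Cmod_triangle.
  rewrite Rabs_mult in HV, HH.
  assert (e' * (3 * (Cmod D + 1)) = eps) by (unfold e'; field; lra).
  assert (e' * (Rabs y * Rabs D2) <= e' * (Rabs y * Cmod D)) by (apply Rmult_le_compat_l; [lra|apply Rmult_le_compat_l; lra]).
  assert (e' * (Rabs y * Rabs D1) <= e' * (Rabs y * Cmod D)) by (apply Rmult_le_compat_l; [lra|apply Rmult_le_compat_l; lra]).
  assert (e' * Rabs y * (3 * Cmod D) <= eps * Rabs y). { rewrite <- H. assert (0 <= e' * Rabs y) by (apply Rmult_le_pos; lra). nra. }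
  nra.
Qed.

Lemma clairaut (G Gx Gy Gxy Gyx : CC -> CC) u : udisc u ->
  (forall w, udisc w -> is_pdx G w (Gx w)) -> (forall w, udisc w -> is_pdy G w (Gy w)) ->
  (forall w, udisc w -> is_pdy Gx w (Gxy w)) -> (forall w, udisc w -> is_pdx Gy w (Gyx w)) ->
  cont_on_cdisc Gxy -> cont_on_cdisc Gyx -> Gxy u = Gyx u.
Proof.
  intros Hu HGx HGy HGxy HGyx Cxy Cyx.
  destruct (classic (Gxy u = Gyx u)) as [E|NE]; auto. exfalso.
  set (m := Cmod (Cminus (Gxy u) (Gyx u))).
  assert (Hm : 0 < m). { unfold m. apply Cmod_gt_0. intro E. apply NE. apply Ceq_minus. exact E. }
  set (e := m / 10). assert (He : 0 < e) by (unfold e; lra).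
  destruct (cont_at Gxy u Cxy Hu e He) as [d1 [Hd1 H1]].
  destruct (cont_at Gyx u Cyx Hu e He) as [d2 [Hd2 H2]].
  set (r := 1 - Cmod u). assert (Hr : 0 < r) by (unfold r, udisc in *; lra).
  set (h := Rmin d1 (Rmin d2 r) / 4).
  assert (Hh : 0 < h). { unfold h. assert (0 < Rmin d1 (Rmin d2 r)) by (repeat apply Rmin_pos; lra). lra. }
  assert (Hh1 : 2 * h < d1) by (unfold h; pose proof (Rmin_l d1 (Rmin d2 r)); lra).
  assert (Hh2 : 2 * h < d2) by (unfold h; pose proof (Rmin_r d1 (Rmin d2 r)); pose proof (Rmin_l d2 r); lra).
  assert (Hh3 : 2 * h < r) by (unfold h; pose proof (Rmin_r d1 (Rmin d2 r)); pose proof (Rmin_r d2 r); lra).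
  assert (Hpt : forall s t, Rmin 0 h <= s <= Rmax 0 h -> Rmin 0 h <= t <= Rmax 0 h -> Cmod (Cminus (pt u s t) u) <= 2 * h).
  { intros s t Hs Ht. rewrite Rmin_left, Rmax_right in * by lra. eapply Rle_trans. apply pt_dist.
    rewrite !Rabs_right by lra. lra. }
  assert (HD : forall s t, Rmin 0 h <= s <= Rmax 0 h -> Rmin 0 h <= t <= Rmax 0 h -> udisc (pt u s t)).
  { intros s t Hs Ht. apply (udisc_nbhd u Hu). specialize (Hpt s t Hs Ht). fold r. lra. }
  assert (Hin0 : Rmin 0 h <= 0 <= Rmax 0 h) by (rewrite Rmin_left, Rmax_right; lra).
  assert (Hinh : Rmin 0 h <= h <= Rmax 0 h) by (rewrite Rmin_left, Rmax_right; lra).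
  assert (HX : forall s, Rmin 0 h <= s <= Rmax 0 h ->
     Cmod (Cminus (Cminus (Gx (pt u s h)) (Gx (pt u s 0))) (Cmult (RtoC (h - 0)) (Gxy u))) <= 2 * e * Rabs (h - 0)).
  { intros s Hs. apply (MVT_C2 (fun t => Gx (pt u s t)) (fun t => Gxy (pt u s t))).
    - intros t Ht. apply py. apply HGxy. apply HD; auto.
    - intros t Ht. left. apply H1. specialize (Hpt s t Hs Ht). lra. }
  assert (QX : Cmod (Cminus (Cminus (Cminus (G (pt u h h)) (G (pt u h 0))) (Cminus (G (pt u 0 h)) (G (pt u 0 0))))
                  (Cmult (RtoC (h - 0)) (Cmult (RtoC h) (Gxy u)))) <= 2 * (2 * e * h) * Rabs (h - 0)).
  { apply (MVT_C2 (fun s => Cminus (G (pt u s h)) (G (pt u s 0))) (fun s => Cminus (Gx (pt u s h)) (Gx (pt u s 0)))).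
    - intros s Hs. apply (is_derive_minus (fun s => G (pt u s h)) (fun s => G (pt u s 0))).
      apply px. apply HGx. apply HD; auto. apply px. apply HGx. apply HD; auto.
    - intros s Hs. specialize (HX s Hs). rewrite Rminus_0_r in HX. rewrite Rabs_right in HX by lra.
      eapply Rle_trans. 2: exact HX. right. f_equal. all: try ring. }
  assert (HY : forall t, Rmin 0 h <= t <= Rmax 0 h ->
     Cmod (Cminus (Cminus (Gy (pt u h t)) (Gy (pt u 0 t))) (Cmult (RtoC (h - 0)) (Gyx u))) <= 2 * e * Rabs (h - 0)).
  { intros t Ht. apply (MVT_C2 (fun s => Gy (pt u s t)) (fun s => Gyx (pt u s t))).
    - intros s Hs. apply px. apply HGyx. apply HD; auto.
    - intros s Hs. left. apply H2. specialize (Hpt s t Hs Ht). lra. }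
  assert (QY : Cmod (Cminus (Cminus (Cminus (G (pt u h h)) (G (pt u 0 h))) (Cminus (G (pt u h 0)) (G (pt u 0 0))))
                  (Cmult (RtoC (h - 0)) (Cmult (RtoC h) (Gyx u)))) <= 2 * (2 * e * h) * Rabs (h - 0)).
  { apply (MVT_C2 (fun t => Cminus (G (pt u h t)) (G (pt u 0 t))) (fun t => Cminus (Gy (pt u h t)) (Gy (pt u 0 t)))).
    - intros t Ht. apply (is_derive_minus (fun t => G (pt u h t)) (fun t => G (pt u 0 t))).
      apply py. apply HGy. apply HD; auto. apply py. apply HGy. apply HD; auto.
    - intros t Ht. specialize (HY t Ht). rewrite Rminus_0_r in HY. rewrite Rabs_right in HY by lra.
      eapply Rle_trans. 2: exact HY. right. f_equal. all: try ring. }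
  rewrite Rminus_0_r, Rabs_right in QX, QY by lra.
  set (a := G (pt u h h)) in *. set (b := G (pt u h 0)) in *. set (c := G (pt u 0 h)) in *. set (d := G (pt u 0 0)) in *.
  assert (E : Cmult (RtoC (h * h)) (Cminus (Gxy u) (Gyx u)) =
     Cminus (Cminus (Cminus (Cminus a c) (Cminus b d)) (Cmult (RtoC h) (Cmult (RtoC h) (Gyx u))))
            (Cminus (Cminus (Cminus a b) (Cminus c d)) (Cmult (RtoC h) (Cmult (RtoC h) (Gxy u))))).
  { rewrite RtoC_mult. ring. }
  assert (HE : Cmod (Cmult (RtoC (h * h)) (Cminus (Gxy u) (Gyx u))) <= 8 * e * (h * h)).
  { rewrite E. unfold Cminus at 1. eapply Rle_trans. apply Cmod_triangle. rewrite Cmod_opp. lra. }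
  rewrite Cmod_RtoC_mult in HE. fold m in HE. rewrite Rabs_right in HE by nra.
  unfold e in HE. assert (0 < h * h) by nra. nra.
Qed.

Lemma second_deriv_test (phi phi1 : R -> R) r q : 0 < r ->
  (forall t, Rabs t < r -> phi t <= phi 0) ->
  (forall t, Rabs t < r -> is_derive phi t (phi1 t)) ->
  is_derive phi1 0 q -> q <= 0.
Proof.
  intros Hr Hmax Hd Hq. destruct (Rle_lt_dec q 0) as [|Hq0]; auto. exfalso.
  rewrite dRR_iff in Hq. destruct (Hq (q / 2) ltac:(lra)) as [d [Hd0 Hd']].
  set (t0 := Rmin d r / 2). assert (Ht0 : 0 < t0) by (unfold t0; pose proof (Rmin_pos d r Hd0 Hr); lra).
  assert (Ht0d : t0 < d) by (unfold t0; pose proof (Rmin_l d r); pose proof (Rmin_pos d r Hd0 Hr); lra).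
  assert (Ht0r : t0 < r) by (unfold t0; pose proof (Rmin_r d r); pose proof (Rmin_pos d r Hd0 Hr); lra).
  assert (Hb : forall t, Rabs t < d -> phi1 t - phi1 0 - t * q >= - (q / 2) * Rabs t /\ phi1 t - phi1 0 - t * q <= (q / 2) * Rabs t).
  { intros t Ht. specialize (Hd' t). rewrite Rminus_0_r in Hd'. specialize (Hd' Ht).
    apply Rabs_le_between in Hd'. lra. }
  destruct (Rle_lt_dec 0 (phi1 0)) as [Hp | Hn].
  - destruct (MVT_cor2 phi phi1 0 t0 Ht0) as [c [Hc1 Hc2]].
    { intros c Hc. apply is_derive_Reals. apply Hd. rewrite Rabs_right; lra. }
    assert (Hpc : phi1 c > 0).
    { specialize (Hb c ltac:(rewrite Rabs_right; lra)). rewrite Rabs_right in Hb by lra. nra. }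
    specialize (Hmax t0 ltac:(rewrite Rabs_right; lra)). nra.
  - destruct (MVT_cor2 phi phi1 (- t0) 0 ltac:(lra)) as [c [Hc1 Hc2]].
    { intros c Hc. apply is_derive_Reals. apply Hd. rewrite Rabs_left1; lra. }
    assert (Hpc : phi1 c < 0).
    { specialize (Hb c ltac:(rewrite Rabs_left1; lra)). rewrite Rabs_left1 in Hb by lra. nra. }
    specialize (Hmax (- t0) ltac:(rewrite Rabs_left1; lra)). nra.
Qed.

Lemma list_argmax {A : Type} (l : list A) (P : A -> Prop) (F : A -> R) :
  (exists a, In a l /\ P a) -> exists a, In a l /\ P a /\ forall b, In b l -> P b -> F b <= F a.
Proof.
  induction l as [|a0 l IH]; intros [a [Ha HP]]. destruct Ha.
  destruct (classic (exists a, In a l /\ P a)) as [Hex|Hnex].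
  - destruct (IH Hex) as [a1 [Ha1 [HP1 Hmax]]].
    destruct (classic (P a0)) as [HP0|HP0].
    + destruct (Rle_lt_dec (F a0) (F a1)).
      * exists a1. split. right; auto. split; auto. intros b [Hb|Hb] HPb. subst; auto. auto.
      * exists a0. split. left; auto. split; auto. intros b [Hb|Hb] HPb. subst; lra. specialize (Hmax b Hb HPb); lra.
    + exists a1. split. right; auto. split; auto. intros b [Hb|Hb] HPb. subst; contradiction. auto.
  - destruct Ha as [Ha|Ha]. subst a0.
    + exists a. split. left; auto. split; auto. intros b [Hb|Hb] HPb. subst; lra. exfalso; apply Hnex; eauto.
    + exfalso; apply Hnex; eauto.
Qed.

Definition toC (x : Compactness.Tn 2 R) : CC := let '(x1, (x2, _)) := x in (x1, x2).
Definition ofC (z : CC) : Compactness.Tn 2 R := (fst z, (snd z, tt)).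

Lemma toC_ofC z : toC (ofC z) = z.
Proof. destruct z; reflexivity. Qed.

Lemma close_toC d x t : close_n 2 d x t -> Cmod (Cminus (toC x) (toC t)) < 2 * d.
Proof.
  destruct x as [x1 [x2 []]], t as [t1 [t2 []]]. simpl. intros [H1 [H2 _]].
  eapply Rle_lt_trans. apply Cmod_le_ReIm. simpl. unfold Re, Im; simpl. 
  replace (x1 + - t1) with (x1 - t1) by ring. replace (x2 + - t2) with (x2 - t2) by ring. lra.
Qed.

Definition Ann (r1 r2 : R) (z : CC) : Prop := r1 <= Cmod z <= r2.

Lemma evt_annulus (W : CC -> R) r1 r2 : 0 < r1 <= r2 ->
  (forall z, Ann r1 r2 z -> forall eps, 0 < eps -> exists delta, 0 < delta /\
     forall w, Ann r1 r2 w -> Cmod (Cminus w z) < delta -> Rabs (W w - W z) < eps) ->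
  exists zs, Ann r1 r2 zs /\ forall z, Ann r1 r2 z -> W z <= W zs.
Proof.
  intros Hr HW. apply NNPP. intros Hno.
  assert (Hb : forall z, exists z', Ann r1 r2 z -> Ann r1 r2 z' /\ W z < W z').
  { intros z. destruct (classic (Ann r1 r2 z)) as [Hz|Hz].
    - apply NNPP. intros Hn. apply Hno. exists z. split; auto. intros z' Hz'.
      destruct (Rle_lt_dec (W z') (W z)); auto. exfalso. apply Hn. exists z'. auto.
    - exists z. intros; contradiction. }
  set (bt := fun z => proj1_sig (constructive_indefinite_description _ (Hb z))).
  assert (Hbt : forall z, Ann r1 r2 z -> Ann r1 r2 (bt z) /\ W z < W (bt z)).
  { intros z. unfold bt. destruct (constructive_indefinite_description _ (Hb z)) as [z' Hz']. simpl. exact Hz'. }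
  assert (Hdel : forall t : Compactness.Tn 2 R, exists d : posreal,
     (Ann r1 r2 (toC t) -> forall w, Ann r1 r2 w -> Cmod (Cminus w (toC t)) < 2 * d -> W w < W (bt (toC t))) /\
     (~ Ann r1 r2 (toC t) -> forall w, Cmod (Cminus w (toC t)) < 2 * d -> ~ Ann r1 r2 w)).
  { intros t. set (z := toC t). destruct (classic (Ann r1 r2 z)) as [Hz|Hz].
    - destruct (Hbt z Hz) as [_ Hlt].
      destruct (HW z Hz (W (bt z) - W z) ltac:(lra)) as [d [Hd Hd']].
      exists (mkposreal (d / 2) ltac:(lra)). split.
      + intros _ w Hw Hwz. simpl in Hwz. specialize (Hd' w Hw ltac:(lra)). apply Rabs_def2 in Hd'. lra.
      + intros; contradiction.
    - assert (Hz0 := Hz). unfold Ann in Hz. apply not_and_or in Hz.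
      assert (Hg : 0 < Rmax (r1 - Cmod z) (Cmod z - r2)).
      { destruct Hz as [Hz|Hz]; [eapply Rlt_le_trans; [|apply Rmax_l]|eapply Rlt_le_trans; [|apply Rmax_r]]; lra. }
      exists (mkposreal (Rmax (r1 - Cmod z) (Cmod z - r2) / 2) ltac:(lra)). split.
      + intros HH. exfalso. exact (Hz0 HH).
      + intros _ w Hwz Hw. simpl in Hwz. unfold Ann in Hw.
        assert (Cmod z <= Cmod w + Cmod (Cminus w z)).
        { replace z with (Cminus w (Cminus w z)) at 1 by ring. unfold Cminus at 1. eapply Rle_trans. apply Cmod_triangle. rewrite Cmod_opp. lra. }
        assert (Cmod w <= Cmod z + Cmod (Cminus w z)).
        { replace w with (Cplus z (Cminus w z)) at 1 by ring. apply Cmod_triangle. }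
        unfold Rmax in Hwz. destruct Rle_dec in Hwz; lra. }
  set (delta := fun t => proj1_sig (constructive_indefinite_description _ (Hdel t))).
  assert (Hdelta : forall t, (Ann r1 r2 (toC t) -> forall w, Ann r1 r2 w -> Cmod (Cminus w (toC t)) < 2 * delta t -> W w < W (bt (toC t))) /\
     (~ Ann r1 r2 (toC t) -> forall w, Cmod (Cminus w (toC t)) < 2 * delta t -> ~ Ann r1 r2 w)).
  { intros t. unfold delta. destruct (constructive_indefinite_description _ (Hdel t)) as [d Hd]. simpl. exact Hd. }
  set (a := (- r2, (- r2, tt)) : Compactness.Tn 2 R). set (b := (r2, (r2, tt)) : Compactness.Tn 2 R).
  apply (compactness_list 2 a b delta). intros [l Hl].
  assert (Hbox : forall z, Ann r1 r2 z -> bounded_n 2 a b (ofC z)).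
  { intros z Hz. unfold Ann in Hz. simpl. destruct z as [x y]. simpl.
    assert (Rabs x <= r2) by (eapply Rle_trans; [apply (re_le_Cmod (x, y))|lra]).
    assert (Rabs y <= r2) by (eapply Rle_trans; [apply (im_le_Cmod' (x, y))|lra]).
    apply Rabs_le_between in H. apply Rabs_le_between in H0. tauto. }
  assert (Hcov : forall z, Ann r1 r2 z -> exists t, In t l /\ Ann r1 r2 (toC t) /\ W z < W (bt (toC t))).
  { intros z Hz. destruct (Hl (ofC z) (Hbox z Hz)) as [t [Ht [_ Hc]]].
    apply close_toC in Hc. rewrite toC_ofC in Hc.
    destruct (classic (Ann r1 r2 (toC t))) as [HA|HA].
    - exists t. split; auto. split; auto. apply (proj1 (Hdelta t) HA z Hz Hc).
    - exfalso. apply (proj2 (Hdelta t) HA z Hc Hz). }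
  assert (Hz0 : Ann r1 r2 (RtoC r1)) by (unfold Ann; rewrite Cmod_R, Rabs_right; lra).
  destruct (Hcov _ Hz0) as [t0 [Ht0 [HA0 _]]].
  destruct (list_argmax l (fun t => Ann r1 r2 (toC t)) (fun t => W (bt (toC t)))) as [ts [Hts [HAs Hmax]]].
  { exists t0. auto. }
  destruct (Hbt _ HAs) as [HAb _].
  destruct (Hcov _ HAb) as [t [Ht [HAt Hlt]]].
  specialize (Hmax t Ht HAt). lra.
Qed.


Fixpoint rsum (n : nat) (a : nat -> R) : R :=
  match n with O => 0 | S m => rsum m a + a m end.

Lemma csum_ext n g g' : (forall i, (i < n)%nat -> g i = g' i) -> csum n g = csum n g'.
Proof. induction n; simpl; intros H; auto. rewrite IHn by (intros; apply H; lia). rewrite H by lia. auto. Qed.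

Lemma rsum_S n a : rsum (S n) a = rsum n a + a n.
Proof. reflexivity. Qed.

Lemma rsum_ext n g g' : (forall i, (i < n)%nat -> g i = g' i) -> rsum n g = rsum n g'.
Proof. induction n; simpl; intros H; auto. rewrite IHn by (intros; apply H; lia). rewrite H by lia. auto. Qed.

Lemma csum_plus n g g' : csum n (fun i => Cplus (g i) (g' i)) = Cplus (csum n g) (csum n g').
Proof. induction n; simpl. cext. rewrite IHn. ring. Qed.

Lemma csum_minus n g g' : csum n (fun i => Cminus (g i) (g' i)) = Cminus (csum n g) (csum n g').
Proof. induction n; simpl. cext. rewrite IHn. ring. Qed.

Lemma csum_scal n c g : csum n (fun i => Cmult c (g i)) = Cmult c (csum n g).
Proof. induction n; simpl. cext. rewrite IHn. ring. Qed.

Lemma csum_conj n g : Cconj (csum n g) = csum n (fun i => Cconj (g i)).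
Proof. induction n; simpl. cext. rewrite Cplus_conj, IHn. auto. Qed.

Lemma csum_Re n g : Re (csum n g) = rsum n (fun i => Re (g i)).
Proof. induction n; simpl. auto. rewrite <- IHn. auto. Qed.

Lemma csum_Im n g : Im (csum n g) = rsum n (fun i => Im (g i)).
Proof. induction n; simpl. auto. rewrite <- IHn. auto. Qed.

Lemma csum_Cmod n g : Cmod (csum n g) <= rsum n (fun i => Cmod (g i)).
Proof. induction n; simpl. rewrite Cmod_0. lra. eapply Rle_trans. apply Cmod_triangle. lra. Qed.

Lemma rsum_le n a b : (forall i, (i < n)%nat -> a i <= b i) -> rsum n a <= rsum n b.
Proof. induction n; simpl; intros H. lra. assert (H1 := H n ltac:(lia)). assert (rsum n a <= rsum n b) by (apply IHn; intros; apply H; lia). lra. Qed.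

Lemma rsum_nonneg n a : (forall i, (i < n)%nat -> 0 <= a i) -> 0 <= rsum n a.
Proof. induction n; simpl; intros H. lra. assert (H1 := H n ltac:(lia)). assert (0 <= rsum n a) by (apply IHn; intros; apply H; lia). lra. Qed.

Lemma rsum_const n c : rsum n (fun _ => c) = INR n * c.
Proof. induction n; simpl. ring. rewrite IHn. destruct n; simpl; ring. Qed.

Lemma rsum_scal n c a : rsum n (fun i => c * a i) = c * rsum n a.
Proof. induction n; simpl. ring. rewrite IHn. ring. Qed.

Lemma rsum_plus n a b : rsum n (fun i => a i + b i) = rsum n a + rsum n b.
Proof. induction n; simpl. ring. rewrite IHn. ring. Qed.

Lemma real_CS n a b : (rsum n (fun i => a i * b i))^2 <= rsum n (fun i => a i ^ 2) * rsum n (fun i => b i ^ 2).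
Proof.
  induction n. simpl; lra. rewrite !rsum_S.
  set (S := rsum n (fun i => a i * b i)) in *. set (A := rsum n (fun i => a i ^ 2)) in *.
  set (B := rsum n (fun i => b i ^ 2)) in *.
  assert (HA : 0 <= A) by (apply rsum_nonneg; intros; nra).
  assert (HB : 0 <= B) by (apply rsum_nonneg; intros; nra).
  set (x := a n) . set (y := b n).
  assert (K0 : 0 <= (x^2 * B - A * y^2)^2) by apply pow2_ge_0.
  assert (K1 : 0 <= (x * y)^2 * (A * B - S^2)) by (apply Rmult_le_pos; [apply pow2_ge_0|lra]).
  assert (K : (x^2 * B + A * y^2)^2 >= 4 * (x * y * S)^2) by nra.
  assert (K2 : 2 * S * x * y <= x^2 * B + A * y^2).
  { assert (0 <= x^2 * B + A * y^2) by nra.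
    destruct (Rle_lt_dec (2 * S * x * y) 0). lra.
    apply Rsqr_incr_0_var. unfold Rsqr. nra. lra. }
  nra.
Qed.

Lemma Cmod_sqr (z : CC) : Cmod z ^ 2 = Re z ^ 2 + Im z ^ 2.
Proof. apply Cmod2_alt. Qed.

Lemma inner_diag_Re d x : Re (inner d x x) = rsum d (fun i => Cmod (x i) ^ 2).
Proof.
  unfold inner. rewrite csum_Re. apply rsum_ext. intros i _. rewrite Cmod_sqr.
  destruct (x i). unfold Re, Im; simpl. ring.
Qed.

Lemma inner_diag_Im d x : Im (inner d x x) = 0.
Proof.
  unfold inner. rewrite csum_Im. induction d. reflexivity. rewrite rsum_S, IHd. destruct (x d). unfold Im. simpl. ring.
Qed.

Lemma inner_diag_nonneg d x : 0 <= Re (inner d x x).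
Proof. rewrite inner_diag_Re. apply rsum_nonneg. intros. nra. Qed.

Lemma inner_diag_real d x : inner d x x = RtoC (Re (inner d x x)).
Proof. apply C_ext. rewrite re_RtoC. auto. rewrite im_RtoC. apply inner_diag_Im. Qed.

Lemma vnorm_sq d x : vnorm d x ^ 2 = Re (inner d x x).
Proof. unfold vnorm. rewrite <- Rsqr_pow2. apply Rsqr_sqrt. apply inner_diag_nonneg. Qed.

Lemma vnorm_nonneg d x : 0 <= vnorm d x.
Proof. unfold vnorm. apply sqrt_pos. Qed.

Lemma inner_CS d x y : Cmod (inner d x y) <= vnorm d x * vnorm d y.
Proof.
  unfold inner. eapply Rle_trans. apply csum_Cmod. cbv beta.
  assert (E : rsum d (fun i => Cmod (Cmult (x i) (Cconj (y i)))) = rsum d (fun i => Cmod (x i) * Cmod (y i))).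
  { apply rsum_ext. intros. rewrite Cmod_mult, Cmod_conj. auto. }
  rewrite E.
  assert (H := real_CS d (fun i => Cmod (x i)) (fun i => Cmod (y i))). cbv beta in H.
  rewrite <- !inner_diag_Re in H. rewrite <- !vnorm_sq in H.
  assert (0 <= rsum d (fun i => Cmod (x i) * Cmod (y i))) by (apply rsum_nonneg; intros; apply Rmult_le_pos; apply Cmod_ge_0).
  assert (0 <= vnorm d x) by apply vnorm_nonneg. assert (0 <= vnorm d y) by apply vnorm_nonneg.
  apply Rsqr_incr_0_var. unfold Rsqr. nra. nra.
Qed.

Lemma inner_conj d x y : Cconj (inner d x y) = inner d y x.
Proof.
  unfold inner. rewrite csum_conj. apply csum_ext. intros. rewrite Cmult_conj, Cconj_conj. ring.
Qed.

Lemma inner_minus_l d x y z : inner d (fun i => Cminus (x i) (y i)) z = Cminus (inner d x z) (inner d y z).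
Proof. unfold inner. rewrite <- csum_minus. apply csum_ext. intros. ring. Qed.

Lemma inner_minus_r d x y z : inner d z (fun i => Cminus (x i) (y i)) = Cminus (inner d z x) (inner d z y).
Proof. unfold inner. rewrite <- csum_minus. apply csum_ext. intros. rewrite Cminus_conj. ring. Qed.

Lemma inner_bound d x y : Cmod (inner d x y) <= rsum d (fun i => Cmod (x i) * Cmod (y i)).
Proof.
  unfold inner. eapply Rle_trans. apply csum_Cmod. right. apply rsum_ext. intros. rewrite Cmod_mult, Cmod_conj. auto.
Qed.


Definition lsum {A : Type} (l : list A) (g : A -> CC) : CC :=
  fold_right (fun a acc => Cplus acc (g a)) (RtoC 0) l.
Definition lrs {A : Type} (l : list A) (g : A -> R) : R :=
  fold_right (fun a acc => acc + g a) 0 l.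

Lemma lsum_nil {A} (g : A -> CC) : lsum [] g = RtoC 0. Proof. reflexivity. Qed.
Lemma lsum_cons {A} a l (g : A -> CC) : lsum (a :: l) g = Cplus (lsum l g) (g a). Proof. reflexivity. Qed.
Lemma lrs_cons {A} a l (g : A -> R) : lrs (a :: l) g = lrs l g + g a. Proof. reflexivity. Qed.

Lemma lsum_app {A} l1 l2 (g : A -> CC) : lsum (l1 ++ l2) g = Cplus (lsum l1 g) (lsum l2 g).
Proof. induction l1. simpl app. rewrite lsum_nil, Cplus_0_l. auto. simpl app. rewrite !lsum_cons. rewrite IHl1. ring. Qed.

Lemma lsum_ext {A} l (g g' : A -> CC) : (forall a, In a l -> g a = g' a) -> lsum l g = lsum l g'.
Proof. induction l; intros H. auto. rewrite !lsum_cons. rewrite IHl, H; auto. left; auto. intros; apply H; right; auto. Qed.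

Lemma lsum_plus {A} l (g g' : A -> CC) : lsum l (fun a => Cplus (g a) (g' a)) = Cplus (lsum l g) (lsum l g').
Proof. induction l. unfold lsum; simpl; cext. rewrite !lsum_cons, IHl. ring. Qed.

Lemma lsum_scal {A} l c (g : A -> CC) : lsum l (fun a => Cmult c (g a)) = Cmult c (lsum l g).
Proof. induction l. unfold lsum; simpl; cext. rewrite !lsum_cons, IHl. ring. Qed.

Lemma lsum_opp {A} l (g : A -> CC) : lsum l (fun a => Copp (g a)) = Copp (lsum l g).
Proof. induction l. unfold lsum; simpl; cext. rewrite !lsum_cons, IHl. ring. Qed.

Lemma lsum_conj {A} l (g : A -> CC) : Cconj (lsum l g) = lsum l (fun a => Cconj (g a)).
Proof. induction l. unfold lsum; simpl; cext. rewrite !lsum_cons, Cplus_conj, IHl. auto. Qed.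

Lemma lsum_map {A B} (m : A -> B) l (g : B -> CC) : lsum (map m l) g = lsum l (fun a => g (m a)).
Proof. induction l. auto. simpl map. rewrite !lsum_cons, IHl. auto. Qed.

Lemma lsum_swap {A B} (s : list A) (t : list B) (F : A -> B -> CC) :
  lsum s (fun p => lsum t (fun q => F p q)) = lsum t (fun q => lsum s (fun p => F p q)).
Proof.
  induction s. rewrite lsum_nil. induction t. auto. rewrite lsum_cons, <- IHt, lsum_nil. cext.
  rewrite lsum_cons, IHs. rewrite <- lsum_plus. apply lsum_ext. intros. rewrite lsum_cons. auto.
Qed.

Lemma lsum_csum {A} (s : list A) n (F : A -> nat -> CC) :
  lsum s (fun p => csum n (fun i => F p i)) = csum n (fun i => lsum s (fun p => F p i)).
Proof.
  induction n. simpl. induction s. auto. rewrite lsum_cons, IHs. cext.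
  simpl. rewrite lsum_plus. rewrite IHn. auto.
Qed.

Lemma lsum_Cmod {A} l (g : A -> CC) : Cmod (lsum l g) <= lrs l (fun a => Cmod (g a)).
Proof. induction l. unfold lsum, lrs; simpl. rewrite Cmod_0; lra. rewrite lsum_cons, lrs_cons. eapply Rle_trans. apply Cmod_triangle. lra. Qed.

Lemma lrs_nonneg {A} l (g : A -> R) : (forall a, In a l -> 0 <= g a) -> 0 <= lrs l g.
Proof. induction l; intros H. unfold lrs; simpl; lra. rewrite lrs_cons. assert (0 <= g a) by (apply H; left; auto).
  assert (0 <= lrs l g) by (apply IHl; intros; apply H; right; auto). lra. Qed.

Lemma lrs_le {A} l (g g' : A -> R) : (forall a, In a l -> g a <= g' a) -> lrs l g <= lrs l g'.
Proof. induction l; intros H. unfold lrs; simpl; lra. rewrite !lrs_cons. assert (g a <= g' a) by (apply H; left; auto).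
  assert (lrs l g <= lrs l g') by (apply IHl; intros; apply H; right; auto). lra. Qed.

Lemma lrs_scal {A} l c (g : A -> R) : lrs l (fun a => c * g a) = c * lrs l g.
Proof. induction l. unfold lrs; simpl; ring. rewrite !lrs_cons, IHl. ring. Qed.

Lemma lrs_app {A} l1 l2 (g : A -> R) : lrs (l1 ++ l2) g = lrs l1 g + lrs l2 g.
Proof. induction l1. unfold lrs at 2; simpl; ring. simpl app. rewrite !lrs_cons, IHl1. ring. Qed.

Lemma lsum_Re {A} l (g : A -> CC) : Re (lsum l g) = lrs l (fun a => Re (g a)).
Proof. induction l. reflexivity. rewrite lsum_cons, lrs_cons. simpl. rewrite <- IHl. reflexivity. Qed.

Lemma keval_lsum {X} (K : X -> X -> CC) s z : keval K s z = lsum s (fun p => Cmult (fst p) (K z (snd p))).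
Proof. reflexivity. Qed.

Definition Bf {X} (K : X -> X -> CC) (s t : kcomb X) : CC :=
  lsum s (fun p => lsum t (fun q => Cmult (Cmult (fst p) (Cconj (fst q))) (K (snd q) (snd p)))).

Lemma knormsq_Bf {X} (K : X -> X -> CC) s : knormsq K s = Re (Bf K s s).
Proof. reflexivity. Qed.

Definition scl {X} (c : CC) (s : kcomb X) : kcomb X := map (fun p => (Cmult c (fst p), snd p)) s.

Lemma kneg_scl {X} (s : kcomb X) : kneg s = scl (Copp (RtoC 1)) s.
Proof. unfold kneg, scl. apply map_ext. intros [a b]. simpl. f_equal. ring. Qed.

Lemma Bf_app_l {X} (K : X -> X -> CC) s1 s2 t : Bf K (s1 ++ s2) t = Cplus (Bf K s1 t) (Bf K s2 t).
Proof. unfold Bf. apply lsum_app. Qed.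

Lemma Bf_app_r {X} (K : X -> X -> CC) s t1 t2 : Bf K s (t1 ++ t2) = Cplus (Bf K s t1) (Bf K s t2).
Proof. unfold Bf. rewrite <- lsum_plus. apply lsum_ext. intros. apply lsum_app. Qed.

Lemma Bf_scl_l {X} (K : X -> X -> CC) c s t : Bf K (scl c s) t = Cmult c (Bf K s t).
Proof. unfold Bf, scl. rewrite lsum_map. rewrite <- lsum_scal. apply lsum_ext. intros. simpl.
  rewrite <- lsum_scal. apply lsum_ext. intros. ring. Qed.

Lemma Bf_scl_r {X} (K : X -> X -> CC) c s t : Bf K s (scl c t) = Cmult (Cconj c) (Bf K s t).
Proof. unfold Bf, scl. rewrite <- lsum_scal. apply lsum_ext. intros. rewrite lsum_map. 
  rewrite <- lsum_scal. apply lsum_ext. intros. simpl. rewrite Cmult_conj. ring. Qed.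

Lemma Bf_neg_l {X} (K : X -> X -> CC) s t : Bf K (kneg s) t = Copp (Bf K s t).
Proof. rewrite kneg_scl, Bf_scl_l. ring. Qed.

Lemma Bf_neg_r {X} (K : X -> X -> CC) s t : Bf K s (kneg t) = Copp (Bf K s t).
Proof. rewrite kneg_scl, Bf_scl_r. replace (Cconj (Copp (RtoC 1))) with (Copp (RtoC 1)) by cext. ring. Qed.

Lemma Bf_keval {X} (K : X -> X -> CC) s t : Bf K s t = lsum t (fun q => Cmult (Cconj (fst q)) (keval K s (snd q))).
Proof. unfold Bf. rewrite lsum_swap. apply lsum_ext. intros q _. rewrite keval_lsum. rewrite <- lsum_scal.
  apply lsum_ext. intros. ring. Qed.

Lemma Bf_herm {X} (K : X -> X -> CC) s t : (forall a b, K b a = Cconj (K a b)) -> Bf K t s = Cconj (Bf K s t).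
Proof. intros HK. unfold Bf. rewrite lsum_swap. rewrite lsum_conj. apply lsum_ext. intros. rewrite lsum_conj.
  apply lsum_ext. intros. rewrite HK. rewrite !Cmult_conj, Cconj_conj. ring. Qed.

Definition psd {X} (K : X -> X -> CC) (P : X -> Prop) : Prop :=
  forall s, List.Forall (fun p => P (snd p)) s -> 0 <= Re (Bf K s s).

Lemma Forall_scl {X} (P : X -> Prop) c s : List.Forall (fun p => P (snd p)) s -> List.Forall (fun p => P (snd p)) (scl c s).
Proof. intros H. unfold scl. apply List.Forall_map. eapply List.Forall_impl. 2: exact H. intros [a b]; simpl; auto. Qed.

Lemma Forall_kneg {X} (P : X -> Prop) s : List.Forall (fun p => P (snd p)) s -> List.Forall (fun p => P (snd p)) (kneg s).
Proof. rewrite kneg_scl. apply Forall_scl. Qed.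

Lemma Re_conj_mult (a b : CC) : Re (Cmult a (Cconj b)) = Re (Cmult (Cconj a) b).
Proof. destruct a, b. unfold Re; simpl. ring. Qed.

Lemma Bf_CS {X} (K : X -> X -> CC) (P : X -> Prop) s t :
  psd K P -> (forall a b, K b a = Cconj (K a b)) ->
  List.Forall (fun p => P (snd p)) s -> List.Forall (fun p => P (snd p)) t ->
  Cmod (Bf K s t) <= sqrt (Re (Bf K s s)) * sqrt (Re (Bf K t t)).
Proof.
  intros Hpsd HK Hs Ht.
  set (A := Re (Bf K s s)). set (D := Re (Bf K t t)). set (be := Bf K s t).
  assert (HA : 0 <= A) by (apply Hpsd; auto). assert (HD : 0 <= D) by (apply Hpsd; auto).
  assert (Hq : forall r : R, 0 <= A - 2 * r * (Cmod be)^2 + r^2 * (Cmod be)^2 * D).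
  { intros r. set (lam := Cmult (RtoC (- r)) be).
    assert (H := Hpsd (s ++ scl lam t) ltac:(apply List.Forall_app; split; auto; apply Forall_scl; auto)).
    rewrite Bf_app_l, !Bf_app_r, !Bf_scl_l, !Bf_scl_r in H.
    rewrite (Bf_herm K s t HK) in H. fold be in H.
    assert (E : Re (Cplus (Cplus (Bf K s s) (Cmult (Cconj lam) be)) (Cplus (Cmult lam (Cconj be)) (Cmult lam (Cmult (Cconj lam) (Bf K t t)))))
      = A - 2 * r * (Cmod be)^2 + r^2 * (Cmod be)^2 * D).
    { unfold lam, A, D. rewrite Cmod_sqr. destruct be as [b1 b2]. destruct (Bf K s s) as [s1 s2]. destruct (Bf K t t) as [t1 t2].
      unfold Re, Im; simpl. ring. }
    rewrite E in H. exact H. }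
  assert (Hsq : (Cmod be)^2 <= A * D).
  { destruct (Rlt_or_le 0 D) as [HD'|HD'].
    - specialize (Hq (/ D)). assert (E : (/ D) ^ 2 * (Cmod be)^2 * D = / D * (Cmod be)^2) by (field; lra).
      rewrite E in Hq. apply Rmult_le_reg_r with (/ D). apply Rinv_0_lt_compat; lra.
      replace (A * D * / D) with A by (field; lra). nra.
    - assert (D = 0) by lra. rewrite H. rewrite Rmult_0_r.
      destruct (Req_dec (Cmod be) 0) as [E|E]. rewrite E; lra.
      exfalso. assert (0 < (Cmod be)^2) by (pose proof (Cmod_ge_0 be); apply pow_lt; lra).
      specialize (Hq ((A + 1) / (2 * (Cmod be)^2))). rewrite H in Hq.
      replace (A - 2 * ((A + 1) / (2 * Cmod be ^ 2)) * Cmod be ^ 2 + ((A + 1) / (2 * Cmod be ^ 2)) ^ 2 * Cmod be ^ 2 * 0) with (-1) in Hq by (field; lra). lra. }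
  rewrite <- sqrt_mult by auto. rewrite <- (sqrt_pow2 (Cmod be)) by apply Cmod_ge_0.
  apply sqrt_le_1_alt. exact Hsq.
Qed.


Lemma Bf_ext {X} (K K' : X -> X -> CC) s t : (forall a b, K a b = K' a b) -> Bf K s t = Bf K' s t.
Proof. intros H. unfold Bf. apply lsum_ext. intros. apply lsum_ext. intros. rewrite H. auto. Qed.

Lemma Bf_csumK {X} n (F : nat -> X -> X -> CC) s t :
  Bf (fun a b => csum n (fun k => F k a b)) s t = csum n (fun k => Bf (F k) s t).
Proof.
  unfold Bf.
  transitivity (lsum s (fun p => csum n (fun k => lsum t (fun q => Cmult (Cmult (fst p) (Cconj (fst q))) (F k (snd q) (snd p)))))).
  { apply lsum_ext. intros p _.
    rewrite <- (lsum_csum t n (fun q k => Cmult (Cmult (fst p) (Cconj (fst q))) (F k (snd q) (snd p)))).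
    apply lsum_ext. intros q _. rewrite <- csum_scal. auto. }
  apply (lsum_csum s n (fun p k => lsum t (fun q => Cmult (Cmult (fst p) (Cconj (fst q))) (F k (snd q) (snd p))))).
Qed.

Lemma Bf_feature {X} (K : X -> X -> CC) (phi : X -> nat -> CC) d s t :
  Bf (fun a b => Cmult (K a b) (csum d (fun i => Cmult (phi a i) (Cconj (phi b i))))) s t
  = csum d (fun i => Bf K (map (fun p => (Cmult (fst p) (Cconj (phi (snd p) i)), snd p)) s)
                          (map (fun p => (Cmult (fst p) (Cconj (phi (snd p) i)), snd p)) t)).
Proof.
  rewrite (Bf_ext _ (fun a b => csum d (fun i => Cmult (K a b) (Cmult (phi a i) (Cconj (phi b i)))))).
  2: { intros. rewrite csum_scal. auto. }
  rewrite Bf_csumK. apply csum_ext. intros i _.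
  unfold Bf. rewrite lsum_map. apply lsum_ext. intros p _. rewrite lsum_map. apply lsum_ext. intros q _.
  simpl. rewrite Cmult_conj, Cconj_conj. ring.
Qed.

Lemma Bf_diag_const {X} (s : kcomb X) :
  Bf (fun _ _ => RtoC 1) s s = Cmult (lsum s fst) (Cconj (lsum s fst)).
Proof.
  unfold Bf. rewrite Cmult_comm. rewrite <- lsum_scal. apply lsum_ext. intros p _.
  rewrite lsum_conj. rewrite Cmult_comm. rewrite <- lsum_scal. apply lsum_ext. intros. ring.
Qed.

Lemma psd_pow {X} (g : X -> nat -> CC) d k s :
  0 <= Re (Bf (fun a b => Cpow (inner d (g a) (g b)) k) s s).
Proof.
  revert s. induction k; intros s.
  - simpl. rewrite Bf_diag_const. rewrite <- Cmod2_conj. rewrite re_RtoC. apply pow2_ge_0.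
  - rewrite (Bf_ext _ (fun a b => Cmult (Cpow (inner d (g a) (g b)) k) (csum d (fun i => Cmult (g a i) (Cconj (g b i)))))).
    2: { intros a b. simpl. unfold inner. ring. }
    rewrite Bf_feature. rewrite csum_Re. apply rsum_nonneg. intros. apply IHk.
Qed.

Lemma Bf_diff {X} (K1 K2 : X -> X -> CC) s t :
  Cminus (Bf K1 s t) (Bf K2 s t) = Bf (fun a b => Cminus (K1 a b) (K2 a b)) s t.
Proof.
  unfold Bf. unfold Cminus at 1. rewrite <- lsum_opp, <- lsum_plus. apply lsum_ext. intros p _.
  rewrite <- lsum_opp, <- lsum_plus. apply lsum_ext. intros. ring.
Qed.

Lemma lrs_ext_comm {A} (l : list A) (g : A -> R) c : lrs l (fun a => g a * c) = c * lrs l g.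
Proof. rewrite <- lrs_scal. induction l. reflexivity. rewrite !lrs_cons, IHl. ring. Qed.

Lemma Bf_bound {X} (K : X -> X -> CC) s t E :
  (forall p q, In p s -> In q t -> Cmod (K (snd q) (snd p)) <= E) ->
  Cmod (Bf K s t) <= E * lrs s (fun p => Cmod (fst p)) * lrs t (fun q => Cmod (fst q)).
Proof.
  intros H. unfold Bf.
  set (Lt := lrs t (fun q => Cmod (fst q))).
  assert (Hin : forall p, In p s -> Cmod (lsum t (fun q => Cmult (Cmult (fst p) (Cconj (fst q))) (K (snd q) (snd p)))) <= Cmod (fst p) * (E * Lt)).
  { intros p Hp. eapply Rle_trans. apply lsum_Cmod.
    replace (Cmod (fst p) * (E * Lt)) with (lrs t (fun q => (Cmod (fst p) * E) * Cmod (fst q))) by (unfold Lt; rewrite lrs_scal; ring).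
    apply lrs_le. intros q Hq. rewrite !Cmod_mult, Cmod_conj. specialize (H p q Hp Hq).
    assert (0 <= Cmod (fst p) * Cmod (fst q)) by (apply Rmult_le_pos; apply Cmod_ge_0). nra. }
  eapply Rle_trans. apply lsum_Cmod. eapply Rle_trans. apply lrs_le. exact Hin.
  right. rewrite (lrs_ext_comm s). ring.
Qed.

Lemma geom_sum (q : CC) n : Cmult (csum n (fun k => Cpow q k)) (Cminus (RtoC 1) q) = Cminus (RtoC 1) (Cpow q n).
Proof. induction n. simpl. cext. simpl csum. simpl Cpow. rewrite Cmult_plus_distr_r, IHn. ring. Qed.

Lemma Cmod_1_minus (q : CC) : 1 - Cmod q <= Cmod (Cminus (RtoC 1) q).
Proof.
  assert (Cmod (RtoC 1) <= Cmod (Cminus (RtoC 1) q) + Cmod q).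
  { replace (RtoC 1) with (Cplus (Cminus (RtoC 1) q) q) at 1 by ring. apply Cmod_triangle. }
  rewrite Cmod_1 in H. lra.
Qed.

Lemma geom_err (q : CC) n rho : Cmod q <= rho -> rho < 1 ->
  Cmod (Cminus (Cinv (Cminus (RtoC 1) q)) (csum n (fun k => Cpow q k))) <= rho ^ n / (1 - rho).
Proof.
  intros Hq Hr.
  assert (Hnz : Cminus (RtoC 1) q <> RtoC 0).
  { intro E. assert (H := Cmod_1_minus q). rewrite E, Cmod_0 in H. lra. }
  assert (E : Cminus (Cinv (Cminus (RtoC 1) q)) (csum n (fun k => Cpow q k)) = Cmult (Cpow q n) (Cinv (Cminus (RtoC 1) q))).
  { assert (G := geom_sum q n).
    set (S := csum n (fun k => Cpow q k)) in *. set (w := Cminus (RtoC 1) q) in *.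
    replace S with (Cmult (Cminus (RtoC 1) (Cpow q n)) (Cinv w)).
    field. auto. rewrite <- G. field. auto. }
  rewrite E, Cmod_mult, Cmod_pow, Cmod_inv by auto.
  assert (H1 := Cmod_1_minus q). assert (Hq0 := Cmod_ge_0 q).
  assert (Cmod q ^ n <= rho ^ n) by (apply pow_incr; lra).
  unfold Rdiv. apply Rmult_le_compat. apply pow_le; lra. left; apply Rinv_0_lt_compat; lra. auto.
  apply Rinv_le_contravar; lra.
Qed.


Lemma Cinv_conj' (z : CC) : Cconj (Cinv z) = Cinv (Cconj z).
Proof. destruct z as [x y]. unfold Cinv, Cconj. simpl. assert (E : - y * (- y * 1) = y * (y * 1)) by ring. rewrite E.
  f_equal. unfold Rdiv. ring. Qed.

Lemma kf_herm d f a b : kf d f b a = Cconj (kf d f a b).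
Proof. unfold kf. rewrite Cinv_conj'. f_equal. rewrite Cminus_conj, inner_conj. f_equal. cext. Qed.

Lemma Re_minus (a b : CC) : Re (Cminus a b) = Re a - Re b.
Proof. destruct a, b. unfold Re; simpl. ring. Qed.

Definition rhomax {X} (g : X -> R) (s : kcomb X) : R := fold_right (fun p acc => Rmax acc (g (snd p))) 0 s.

Lemma rhomax_ge {X} (g : X -> R) s p : In p s -> g (snd p) <= rhomax g s.
Proof. induction s; simpl. tauto. intros [H|H]. subst. apply Rmax_r. eapply Rle_trans. apply IHs; auto. apply Rmax_l. Qed.

Lemma rhomax_nonneg {X} (g : X -> R) s : 0 <= rhomax g s.
Proof. induction s; simpl. lra. eapply Rle_trans. exact IHs. apply Rmax_l. Qed.

Lemma rhomax_lt {X} (g : X -> R) s c : 0 < c -> List.Forall (fun p => g (snd p) < c) s -> rhomax g s < c.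
Proof. intros Hc H. induction H; simpl. auto. apply Rmax_lub_lt; auto. Qed.

Lemma psd_kf d (f : CC -> nat -> CC) : (forall x, udisc x -> vnorm d (f x) < 1) -> psd (kf d f) udisc.
Proof.
  intros Hf s Hs. apply Rnot_lt_le. intro Hneg. set (eta := - Re (Bf (kf d f) s s)).
  assert (Heta : 0 < eta) by (unfold eta; lra).
  set (rho := rhomax (fun x => vnorm d (f x)) s).
  assert (Hr0 : 0 <= rho) by apply rhomax_nonneg.
  assert (Hr1 : rho < 1).
  { apply rhomax_lt. lra. eapply List.Forall_impl. 2: exact Hs. intros p Hp. apply Hf. auto. }
  set (Ls := lrs s (fun p => Cmod (fst p))).
  assert (HLs : 0 <= Ls) by (apply lrs_nonneg; intros; apply Cmod_ge_0).
  destruct (pow_lt_1_zero rho ltac:(rewrite Rabs_right; lra) (eta * (1 - rho) / (Ls * Ls + 1))) as [n Hn].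
  { apply Rdiv_lt_0_compat. nra. nra. }
  specialize (Hn n (le_n n)). rewrite Rabs_right in Hn by (apply Rle_ge, pow_le; lra).
  set (Kn := fun a b => csum n (fun k => Cpow (inner d (f a) (f b)) k)).
  assert (HKn : 0 <= Re (Bf Kn s s)).
  { unfold Kn. rewrite Bf_csumK, csum_Re. apply rsum_nonneg. intros. apply psd_pow. }
  assert (Hdiff : Cmod (Cminus (Bf (kf d f) s s) (Bf Kn s s)) <= rho ^ n / (1 - rho) * Ls * Ls).
  { rewrite Bf_diff. apply Bf_bound. intros p q Hp Hq. unfold kf, Kn.
    apply geom_err; auto. eapply Rle_trans. apply inner_CS.
    assert (H1 := rhomax_ge (fun x => vnorm d (f x)) s q Hq). assert (H2 := rhomax_ge (fun x => vnorm d (f x)) s p Hp).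
    simpl in H1, H2. fold rho in H1, H2.
    assert (0 <= vnorm d (f (snd q))) by apply vnorm_nonneg. assert (0 <= vnorm d (f (snd p))) by apply vnorm_nonneg.
    nra. }
  assert (Hre : Re (Bf Kn s s) - Re (Bf (kf d f) s s) <= Cmod (Cminus (Bf (kf d f) s s) (Bf Kn s s))).
  { eapply Rle_trans. 2: apply re_le_Cmod. eapply Rle_trans. 2: apply Rabs_maj2.
    right. rewrite Re_minus. ring. }
  assert (rho ^ n / (1 - rho) * Ls * Ls < eta).
  { assert (rho ^ n * (Ls * Ls + 1) < eta * (1 - rho)).
    { apply Rmult_lt_compat_r with (r := Ls * Ls + 1) in Hn. 2: nra.
      unfold Rdiv in Hn. rewrite Rmult_assoc, Rinv_l in Hn by nra. lra. }
    assert (rho ^ n * (Ls * Ls) < eta * (1 - rho)) by (assert (0 <= rho ^ n) by (apply pow_le; lra); nra).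
    apply Rmult_lt_reg_r with (1 - rho). lra.
    replace (rho ^ n / (1 - rho) * Ls * Ls * (1 - rho)) with (rho ^ n * (Ls * Ls)) by (field; lra). lra. }
  unfold eta in *. lra.
Qed.

Lemma lsum_lim {A} (v : list A) (F : nat -> A -> CC) (G : A -> CC) :
  (forall q, In q v -> forall eps, 0 < eps -> exists N, forall n, (N <= n)%nat -> Cmod (Cminus (F n q) (G q)) < eps) ->
  forall eps, 0 < eps -> exists N, forall n, (N <= n)%nat -> Cmod (Cminus (lsum v (F n)) (lsum v G)) < eps.
Proof.
  induction v as [|a v IH]; intros H eps He.
  - exists O. intros. rewrite !lsum_nil. replace (Cminus (RtoC 0) (RtoC 0)) with (RtoC 0) by cext. rewrite Cmod_0. auto.
  - destruct (IH ltac:(intros q Hq; apply H; right; auto) (eps / 2) ltac:(lra)) as [N1 HN1].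
    destruct (H a ltac:(left; auto) (eps / 2) ltac:(lra)) as [N2 HN2].
    exists (Nat.max N1 N2). intros n Hn. rewrite !lsum_cons.
    replace (Cminus (Cplus (lsum v (F n)) (F n a)) (Cplus (lsum v G) (G a))) with
      (Cplus (Cminus (lsum v (F n)) (lsum v G)) (Cminus (F n a) (G a))) by ring.
    eapply Rle_lt_trans. apply Cmod_triangle. specialize (HN1 n ltac:(lia)). specialize (HN2 n ltac:(lia)). lra.
Qed.

Lemma rkhs_bound d (f : CC -> nat -> CC) h :
  (forall x, udisc x -> vnorm d (f x) < 1) -> in_Hf d f h ->
  exists M, 0 <= M /\ forall v, List.Forall (fun p => udisc (snd p)) v ->
    Cmod (lsum v (fun q => Cmult (Cconj (fst q)) (h (snd q)))) <= M * sqrt (knormsq (kf d f) v).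
Proof.
  intros Hf Hin. unfold in_Hf, in_RKHS in Hin. destruct Hin as [s [Hpts [Hcau Hconv]]].
  assert (Hpsd := psd_kf d f Hf). assert (Hh := kf_herm d f).
  destruct (Hcau 1 ltac:(lra)) as [N HN].
  set (M := sqrt (Re (Bf (kf d f) (s N) (s N))) + 1).
  exists M. split. unfold M. pose proof (sqrt_pos (Re (Bf (kf d f) (s N) (s N)))). lra.
  intros v Hv.
  assert (Hb : forall n, (N <= n)%nat -> Cmod (Bf (kf d f) (s n) v) <= M * sqrt (knormsq (kf d f) v)).
  { intros n Hn.
    assert (E : Bf (kf d f) (s n) v = Cplus (Bf (kf d f) (s N) v) (Bf (kf d f) (s n ++ kneg (s N)) v)).
    { rewrite Bf_app_l, Bf_neg_l. ring. }
    rewrite E. eapply Rle_trans. apply Cmod_triangle.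
    assert (H1 := Bf_CS (kf d f) udisc (s N) v Hpsd (fun a b => Hh a b) (Hpts N) Hv).
    assert (H2 := Bf_CS (kf d f) udisc (s n ++ kneg (s N)) v Hpsd (fun a b => Hh a b)
                   ltac:(apply List.Forall_app; split; [apply Hpts|apply Forall_kneg; apply Hpts]) Hv).
    specialize (HN n N Hn (le_n N)). rewrite knormsq_Bf in HN.
    assert (sqrt (Re (Bf (kf d f) (s n ++ kneg (s N)) (s n ++ kneg (s N)))) <= 1).
    { rewrite <- sqrt_1. apply sqrt_le_1_alt. lra. }
    rewrite knormsq_Bf. unfold M.
    assert (0 <= sqrt (Re (Bf (kf d f) v v))) by apply sqrt_pos.
    nra. }
  apply Rnot_lt_le. intro Hlt.
  set (gap := Cmod (lsum v (fun q => Cmult (Cconj (fst q)) (h (snd q)))) - M * sqrt (knormsq (kf d f) v)).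
  destruct (lsum_lim v (fun n q => Cmult (Cconj (fst q)) (keval (kf d f) (s n) (snd q))) (fun q => Cmult (Cconj (fst q)) (h (snd q))))
    with (eps := gap) as [N2 HN2].
  { intros q Hq eps He. rewrite List.Forall_forall in Hv. specialize (Hv q Hq).
    destruct (Hconv (snd q) Hv (eps / (Cmod (fst q) + 1))) as [N3 HN3].
    { apply Rdiv_lt_0_compat. lra. pose proof (Cmod_ge_0 (fst q)); lra. }
    exists N3. intros n Hn. specialize (HN3 n Hn).
    replace (Cminus (Cmult (Cconj (fst q)) (keval (kf d f) (s n) (snd q))) (Cmult (Cconj (fst q)) (h (snd q))))
      with (Cmult (Cconj (fst q)) (Cminus (keval (kf d f) (s n) (snd q)) (h (snd q)))) by ring.
    rewrite Cmod_mult, Cmod_conj. pose proof (Cmod_ge_0 (fst q)).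
    apply Rmult_lt_compat_l with (r := Cmod (fst q) + 1) in HN3. 2: lra.
    unfold Rdiv in HN3. rewrite <- Rmult_assoc, (Rmult_comm (Cmod (fst q) + 1) eps), Rmult_assoc, Rinv_r in HN3 by lra.
    pose proof (Cmod_ge_0 (Cminus (keval (kf d f) (s n) (snd q)) (h (snd q)))). nra. }
  { unfold gap. lra. }
  specialize (HN2 (Nat.max N N2) ltac:(lia)). specialize (Hb (Nat.max N N2) ltac:(lia)).
  rewrite Bf_keval in Hb.
  set (X1 := lsum v (fun q => Cmult (Cconj (fst q)) (keval (kf d f) (s (Nat.max N N2)) (snd q)))) in *.
  set (X2 := lsum v (fun q => Cmult (Cconj (fst q)) (h (snd q)))) in *.
  assert (Cmod X2 <= Cmod X1 + Cmod (Cminus X1 X2)).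
  { replace X2 with (Cminus X1 (Cminus X1 X2)) at 1 by ring. unfold Cminus at 1. eapply Rle_trans. apply Cmod_triangle. rewrite Cmod_opp. lra. }
  unfold gap in *. lra.
Qed.


Definition Good (g gx gy gxx gxy gyx gyy : CC -> CC) : Prop :=
  (forall z, udisc z -> is_derive g z (gx z)) /\
  (forall z, udisc z -> is_pdx g z (gx z) /\ is_pdy g z (gy z) /\ is_pdx gx z (gxx z) /\
      is_pdy gx z (gxy z) /\ is_pdx gy z (gyx z) /\ is_pdy gy z (gyy z)) /\
  cont_on_cdisc g /\ cont_on_cdisc gx /\ cont_on_cdisc gy /\ cont_on_cdisc gxx /\
  cont_on_cdisc gxy /\ cont_on_cdisc gyx /\ cont_on_cdisc gyy.

Lemma dRC_plus (F G : R -> CC) t l1 l2 : is_derive F t l1 -> is_derive G t l2 ->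
  is_derive (fun s => Cplus (F s) (G s)) t (Cplus l1 l2).
Proof. intros H1 H2. apply (is_derive_plus F G t l1 l2 H1 H2). Qed.

Lemma dRC_cmul (F : R -> CC) c t l : is_derive F t l -> is_derive (fun s => Cmult c (F s)) t (Cmult c l).
Proof.
  rewrite !dRC_iff. intros H eps He. destruct (H (eps / (Cmod c + 1))) as [d [Hd H']].
  { apply Rdiv_lt_0_compat. lra. pose proof (Cmod_ge_0 c); lra. }
  exists d. split; auto. intros y Hy. specialize (H' y Hy).
  replace (Cminus (Cminus (Cmult c (F y)) (Cmult c (F t))) (Cmult (RtoC (y - t)) (Cmult c l)))
    with (Cmult c (Cminus (Cminus (F y) (F t)) (Cmult (RtoC (y - t)) l))) by ring.
  rewrite Cmod_mult. pose proof (Cmod_ge_0 c). pose proof (Rabs_pos (y - t)).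
  eapply Rle_trans. apply Rmult_le_compat_l. auto. exact H'.
  assert (Cmod c * (eps / (Cmod c + 1)) <= eps).
  { unfold Rdiv. apply Rmult_le_reg_r with (Cmod c + 1). lra.
    rewrite Rmult_assoc, Rmult_assoc, Rinv_l by lra. nra. }
  nra.
Qed.

Lemma dCC_plus (F G : CC -> CC) t l1 l2 : is_derive F t l1 -> is_derive G t l2 ->
  is_derive (fun s => Cplus (F s) (G s)) t (Cplus l1 l2).
Proof. intros H1 H2. apply (is_derive_plus F G t l1 l2 H1 H2). Qed.

Lemma dCC_cmul (F : CC -> CC) c t l : is_derive F t l -> is_derive (fun s => Cmult c (F s)) t (Cmult c l).
Proof.
  rewrite !dCC_iff. intros H eps He. destruct (H (eps / (Cmod c + 1))) as [d [Hd H']].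
  { apply Rdiv_lt_0_compat. lra. pose proof (Cmod_ge_0 c); lra. }
  exists d. split; auto. intros y Hy. specialize (H' y Hy).
  replace (Cminus (Cminus (Cmult c (F y)) (Cmult c (F t))) (Cmult (Cminus y t) (Cmult c l)))
    with (Cmult c (Cminus (Cminus (F y) (F t)) (Cmult (Cminus y t) l))) by ring.
  rewrite Cmod_mult. pose proof (Cmod_ge_0 c). pose proof (Cmod_ge_0 (Cminus y t)).
  eapply Rle_trans. apply Rmult_le_compat_l. auto. exact H'.
  assert (Cmod c * (eps / (Cmod c + 1)) <= eps).
  { unfold Rdiv. apply Rmult_le_reg_r with (Cmod c + 1). lra.
    rewrite Rmult_assoc, Rmult_assoc, Rinv_l by lra. nra. }
  nra.
Qed.

Lemma dCC_const (c : CC) t : is_derive (fun _ : CC => c) t (RtoC 0).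
Proof. rewrite dCC_iff. intros eps He. exists 1. split. lra. intros y _.
  replace (Cminus (Cminus c c) (Cmult (Cminus y t) (RtoC 0))) with (RtoC 0) by ring. rewrite Cmod_0.
  pose proof (Cmod_ge_0 (Cminus y t)). nra. Qed.

Lemma dRC_const (c : CC) t : is_derive (fun _ : R => c) t (RtoC 0).
Proof. rewrite dRC_iff. intros eps He. exists 1. split. lra. intros y _.
  replace (Cminus (Cminus c c) (Cmult (RtoC (y - t)) (RtoC 0))) with (RtoC 0) by ring. rewrite Cmod_0.
  pose proof (Rabs_pos (y - t)). nra. Qed.

Lemma cont_plus g1 g2 : cont_on_cdisc g1 -> cont_on_cdisc g2 -> cont_on_cdisc (fun z => Cplus (g1 z) (g2 z)).
Proof.
  intros H1 H2 z Hz eps He. destruct (H1 z Hz (eps/2) ltac:(lra)) as [d1 [Hd1 H1']].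
  destruct (H2 z Hz (eps/2) ltac:(lra)) as [d2 [Hd2 H2']].
  exists (Rmin d1 d2). split. apply Rmin_pos; auto. intros w Hw Hwz.
  specialize (H1' w Hw (Rlt_le_trans _ _ _ Hwz (Rmin_l _ _))). specialize (H2' w Hw (Rlt_le_trans _ _ _ Hwz (Rmin_r _ _))).
  replace (Cminus (Cplus (g1 w) (g2 w)) (Cplus (g1 z) (g2 z))) with (Cplus (Cminus (g1 w) (g1 z)) (Cminus (g2 w) (g2 z))) by ring.
  eapply Rle_lt_trans. apply Cmod_triangle. lra.
Qed.

Lemma cont_cmul c g : cont_on_cdisc g -> cont_on_cdisc (fun z => Cmult c (g z)).
Proof.
  intros H z Hz eps He. destruct (H z Hz (eps / (Cmod c + 1))) as [d [Hd H']].
  { apply Rdiv_lt_0_compat. lra. pose proof (Cmod_ge_0 c); lra. }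
  exists d. split; auto. intros w Hw Hwz. specialize (H' w Hw Hwz).
  replace (Cminus (Cmult c (g w)) (Cmult c (g z))) with (Cmult c (Cminus (g w) (g z))) by ring.
  rewrite Cmod_mult. pose proof (Cmod_ge_0 c). pose proof (Cmod_ge_0 (Cminus (g w) (g z))).
  assert (Cmod c * (eps / (Cmod c + 1)) < eps + 0).
  { unfold Rdiv. apply Rmult_lt_reg_r with (Cmod c + 1). lra.
    rewrite Rmult_assoc, Rmult_assoc, Rinv_l by lra. nra. }
  assert (Cmod c * Cmod (Cminus (g w) (g z)) <= Cmod c * (eps / (Cmod c + 1))) by (apply Rmult_le_compat_l; lra).
  lra.
Qed.

Lemma cont_const (c : CC) : cont_on_cdisc (fun _ => c).
Proof. intros z _ eps He. exists 1. split. lra. intros. replace (Cminus c c) with (RtoC 0) by ring. rewrite Cmod_0. auto. Qed.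

Lemma Good_plus g gx gy gxx gxy gyx gyy h hx hy hxx hxy hyx hyy :
  Good g gx gy gxx gxy gyx gyy -> Good h hx hy hxx hxy hyx hyy ->
  Good (fun z => Cplus (g z) (h z)) (fun z => Cplus (gx z) (hx z)) (fun z => Cplus (gy z) (hy z))
       (fun z => Cplus (gxx z) (hxx z)) (fun z => Cplus (gxy z) (hxy z)) (fun z => Cplus (gyx z) (hyx z))
       (fun z => Cplus (gyy z) (hyy z)).
Proof.
  intros [G1 [G2 [G3 [G4 [G5 [G6 [G7 [G8 G9]]]]]]]] [H1 [H2 [H3 [H4 [H5 [H6 [H7 [H8 H9]]]]]]]].
  refine (conj _ (conj _ (conj _ (conj _ (conj _ (conj _ (conj _ (conj _ _)))))))); try (apply cont_plus; auto).
  - intros z Hz. apply dCC_plus; auto.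
  - intros z Hz. destruct (G2 z Hz) as [A1 [A2 [A3 [A4 [A5 A6]]]]]. destruct (H2 z Hz) as [B1 [B2 [B3 [B4 [B5 B6]]]]].
    unfold is_pdx, is_pdy in *.
    refine (conj _ (conj _ (conj _ (conj _ (conj _ _))))); apply dRC_plus; auto.
Qed.

Lemma Good_cmul c g gx gy gxx gxy gyx gyy :
  Good g gx gy gxx gxy gyx gyy ->
  Good (fun z => Cmult c (g z)) (fun z => Cmult c (gx z)) (fun z => Cmult c (gy z))
       (fun z => Cmult c (gxx z)) (fun z => Cmult c (gxy z)) (fun z => Cmult c (gyx z))
       (fun z => Cmult c (gyy z)).
Proof.
  intros [G1 [G2 [G3 [G4 [G5 [G6 [G7 [G8 G9]]]]]]]].
  refine (conj _ (conj _ (conj _ (conj _ (conj _ (conj _ (conj _ (conj _ _)))))))); try (apply cont_cmul; auto).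
  - intros z Hz. apply dCC_cmul; auto.
  - intros z Hz. destruct (G2 z Hz) as [A1 [A2 [A3 [A4 [A5 A6]]]]].
    unfold is_pdx, is_pdy in *.
    refine (conj _ (conj _ (conj _ (conj _ (conj _ _))))); apply dRC_cmul; auto.
Qed.

Lemma Good_const (c : CC) : Good (fun _ => c) (fun _ => RtoC 0) (fun _ => RtoC 0) (fun _ => RtoC 0)
   (fun _ => RtoC 0) (fun _ => RtoC 0) (fun _ => RtoC 0).
Proof.
  refine (conj _ (conj _ (conj _ (conj _ (conj _ (conj _ (conj _ (conj _ _)))))))); try apply cont_const.
  - intros. apply dCC_const.
  - intros. unfold is_pdx, is_pdy. refine (conj _ (conj _ (conj _ (conj _ (conj _ _))))); apply dRC_const.
Qed.

Lemma Good_of_hyp (g : CC -> CC) :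
  (forall x, udisc x -> ex_derive g x) -> C2_on_cdisc g ->
  exists gx gy gxx gxy gyx gyy, Good g gx gy gxx gxy gyx gyy.
Proof.
  intros Hd [gx [gy [gxx [gxy [gyx [gyy [Hp [C1 [C2 [C3 [C4 [C5 [C6 C7]]]]]]]]]]]]].
  exists gx, gy, gxx, gxy, gyx, gyy.
  refine (conj _ (conj _ (conj _ (conj _ (conj _ (conj _ (conj _ (conj _ _)))))))); auto.
  intros z Hz. destruct (Hd z Hz) as [l Hl]. destruct (holo_pd g z l Hl) as [Hx _].
  destruct (Hp z Hz) as [Hx' _]. unfold is_pdx in Hx, Hx'. rewrite <- (dRC_unique _ _ _ _ Hx Hx'). auto.
Qed.

Lemma Good_lincomb (f : CC -> nat -> CC) (c : nat -> CC) n :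
  (forall i, (i < n)%nat -> exists gx gy gxx gxy gyx gyy, Good (fun z => f z i) gx gy gxx gxy gyx gyy) ->
  exists gx gy gxx gxy gyx gyy, Good (fun z => csum n (fun i => Cmult (c i) (f z i))) gx gy gxx gxy gyx gyy.
Proof.
  induction n; intros H.
  - exists (fun _ => RtoC 0), (fun _ => RtoC 0), (fun _ => RtoC 0), (fun _ => RtoC 0), (fun _ => RtoC 0), (fun _ => RtoC 0).
    apply (Good_const (RtoC 0)).
  - destruct IHn as [gx [gy [gxx [gxy [gyx [gyy HG]]]]]]. intros; apply H; lia.
    destruct (H n ltac:(lia)) as [hx [hy [hxx [hxy [hyx [hyy HH]]]]]].
    apply (Good_cmul (c n)) in HH.
    eexists _, _, _, _, _, _. apply (Good_plus _ _ _ _ _ _ _ _ _ _ _ _ _ _ HG HH).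
Qed.


Lemma seg_in xi D s t : cudisc xi -> udisc (Cplus xi (Cmult (RtoC s) D)) -> 0 < t <= s ->
  udisc (Cplus xi (Cmult (RtoC t) D)).
Proof.
  unfold cudisc, udisc. intros Hx Hz Ht. set (lam := t / s).
  assert (Hl : 0 < lam <= 1). { unfold lam. split. apply Rdiv_lt_0_compat; lra. apply Rmult_le_reg_r with s. lra. unfold Rdiv. rewrite Rmult_assoc, Rinv_l; lra. }
  replace (Cplus xi (Cmult (RtoC t) D)) with (Cplus (Cmult (RtoC (1 - lam)) xi) (Cmult (RtoC lam) (Cplus xi (Cmult (RtoC s) D)))).
  2: { unfold lam. rewrite !RtoC_minus. rewrite RtoC_div by lra. field. intro E. apply RtoC_inj in E. lra. }
  eapply Rle_lt_trans. apply Cmod_triangle. rewrite !Cmod_RtoC_mult. rewrite !Rabs_right by lra.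
  assert ((1 - lam) * Cmod xi <= 1 - lam) by (apply Rmult_le_compat_l with (r := 1 - lam) in Hx; lra).
  assert (lam * Cmod (Cplus xi (Cmult (RtoC s) D)) < lam) by (apply Rmult_lt_compat_l with (r := lam) in Hz; lra).
  lra.
Qed.

Lemma rcont_seg (G : CC -> CC) xi D a b : cont_on_cdisc G ->
  (forall t, a <= t <= b -> cudisc (Cplus xi (Cmult (RtoC t) D))) ->
  rcont (fun t => G (Cplus xi (Cmult (RtoC t) D))) a b.
Proof.
  intros HG Hseg t Ht eps He. destruct (HG _ (Hseg t Ht) eps He) as [d [Hd H]].
  exists (d / (Cmod D + 1)). split. apply Rdiv_lt_0_compat. lra. pose proof (Cmod_ge_0 D); lra.
  intros t' Ht' Htt. apply H. apply Hseg; auto.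
  replace (Cminus (Cplus xi (Cmult (RtoC t') D)) (Cplus xi (Cmult (RtoC t) D))) with (Cmult (RtoC (t' - t)) D)
    by (rewrite RtoC_minus; ring).
  rewrite Cmod_RtoC_mult. pose proof (Cmod_ge_0 D). pose proof (Rabs_pos (t' - t)).
  apply Rmult_lt_compat_r with (r := Cmod D + 1) in Htt. 2: lra.
  unfold Rdiv in Htt. rewrite Rmult_assoc, Rinv_l in Htt by lra. nra.
Qed.

Lemma taylor2 g gx gy gxx gxy gyx gyy xi D :
  Good g gx gy gxx gxy gyx gyy -> cudisc xi ->
  exists K, 0 <= K /\ exists s0, 0 < s0 /\ forall s, 0 < s <= s0 -> udisc (Cplus xi (Cmult (RtoC s) D)) ->
    Cmod (Cminus (Cminus (g (Cplus xi (Cmult (RtoC s) D))) (g xi)) (Cmult (RtoC s) (Cmult D (gx xi)))) <= K * s ^ 2.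
Proof.
  intros [G1 [G2 [G3 [G4 [G5 [G6 [G7 [G8 G9]]]]]]]] Hxi.
  destruct (G6 xi Hxi 1 ltac:(lra)) as [r1 [Hr1 H1]].
  destruct (G7 xi Hxi 1 ltac:(lra)) as [r2 [Hr2 H2]].
  set (Bd := Cmod (gxx xi) + Cmod (gxy xi) + 2).
  assert (HDm := Cmod_ge_0 D).
  assert (HB : 0 <= Bd) by (unfold Bd; pose proof (Cmod_ge_0 (gxx xi)); pose proof (Cmod_ge_0 (gxy xi)); lra).
  set (M := Cmod D * Bd). assert (HM : 0 <= M) by (unfold M; nra).
  exists (4 * Cmod D * M). split. nra.
  set (rr := Rmin r1 r2). assert (Hrr : 0 < rr) by (apply Rmin_pos; auto).
  exists (rr / (Cmod D + 1) / 2). split. apply Rdiv_lt_0_compat. apply Rdiv_lt_0_compat; lra. lra.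
  intros s Hs Hz.
  assert (Hseg : forall t, 0 < t <= s -> udisc (Cplus xi (Cmult (RtoC t) D))) by (intros; eapply seg_in; eauto).
  assert (Hcseg : forall t, 0 <= t <= s -> cudisc (Cplus xi (Cmult (RtoC t) D))).
  { intros t Ht. destruct (Req_dec t 0). subst. replace (Cplus xi (Cmult (RtoC 0) D)) with xi by cext. auto.
    apply udisc_cudisc. apply Hseg. lra. }
  assert (Hnear : forall t, 0 <= t <= s -> Cmod (Cminus (Cplus xi (Cmult (RtoC t) D)) xi) < rr).
  { intros t Ht. replace (Cminus (Cplus xi (Cmult (RtoC t) D)) xi) with (Cmult (RtoC t) D) by ring.
    rewrite Cmod_RtoC_mult, Rabs_right by lra.
    assert (s * (Cmod D + 1) <= rr / 2).
    { destruct Hs as [_ Hs]. apply Rmult_le_compat_r with (r := Cmod D + 1) in Hs. 2: lra.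
      replace (rr / (Cmod D + 1) / 2 * (Cmod D + 1)) with (rr / 2) in Hs by (field; lra). lra. }
    nra. }
  assert (HA : forall t, 0 < t <= s -> Cmod (Cminus (gx (Cplus xi (Cmult (RtoC t) D))) (gx xi)) <= 2 * M * t).
  { intros t Ht.
    assert (HH := MVT_C (fun tau => gx (Cplus xi (Cmult (RtoC tau) D)))
                   (fun tau => Cplus (Cmult (RtoC (Re D)) (gxx (Cplus xi (Cmult (RtoC tau) D))))
                                     (Cmult (RtoC (Im D)) (gxy (Cplus xi (Cmult (RtoC tau) D)))))
                   0 t (RtoC 0) M ltac:(lra)).
    assert (E0 : Cplus xi (Cmult (RtoC 0) D) = xi) by cext.
    eapply Rle_trans. 2: (rewrite Rminus_0_r in HH; apply HH). right. rewrite E0. f_equal. ring.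
    - intros tau Htau. apply pd_shift. apply dir_deriv.
      + apply Hseg. lra.
      + intros w Hw. apply (G2 w Hw).
      + intros w Hw. apply (G2 w Hw).
      + exact G7.
    - apply rcont_seg. auto. intros; apply Hcseg; lra.
    - intros tau Htau. replace (Cminus (Cplus (Cmult (RtoC (Re D)) (gxx (Cplus xi (Cmult (RtoC tau) D))))
                                     (Cmult (RtoC (Im D)) (gxy (Cplus xi (Cmult (RtoC tau) D))))) (RtoC 0))
        with (Cplus (Cmult (RtoC (Re D)) (gxx (Cplus xi (Cmult (RtoC tau) D))))
                                     (Cmult (RtoC (Im D)) (gxy (Cplus xi (Cmult (RtoC tau) D))))) by ring.
      eapply Rle_trans. apply Cmod_triangle. rewrite !Cmod_RtoC_mult.
      assert (Hw := Hcseg tau ltac:(lra)). assert (Hn := Hnear tau ltac:(lra)).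
      specialize (H1 _ Hw ltac:(eapply Rlt_le_trans; [exact Hn|apply Rmin_l])).
      specialize (H2 _ Hw ltac:(eapply Rlt_le_trans; [exact Hn|apply Rmin_r])).
      assert (Cmod (gxx (Cplus xi (Cmult (RtoC tau) D))) <= Cmod (gxx xi) + 1).
      { replace (gxx (Cplus xi (Cmult (RtoC tau) D))) with (Cplus (gxx xi) (Cminus (gxx (Cplus xi (Cmult (RtoC tau) D))) (gxx xi))) by ring.
        eapply Rle_trans. apply Cmod_triangle. lra. }
      assert (Cmod (gxy (Cplus xi (Cmult (RtoC tau) D))) <= Cmod (gxy xi) + 1).
      { replace (gxy (Cplus xi (Cmult (RtoC tau) D))) with (Cplus (gxy xi) (Cminus (gxy (Cplus xi (Cmult (RtoC tau) D))) (gxy xi))) by ring.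
        eapply Rle_trans. apply Cmod_triangle. lra. }
      assert (Rabs (Re D) <= Cmod D) by apply re_le_Cmod. assert (Rabs (Im D) <= Cmod D) by apply im_le_Cmod'.
      unfold M, Bd.
      assert (Rabs (Re D) * Cmod (gxx (Cplus xi (Cmult (RtoC tau) D))) <= Cmod D * (Cmod (gxx xi) + 1))
        by (apply Rmult_le_compat; auto; try apply Rabs_pos; apply Cmod_ge_0).
      assert (Rabs (Im D) * Cmod (gxy (Cplus xi (Cmult (RtoC tau) D))) <= Cmod D * (Cmod (gxy xi) + 1))
        by (apply Rmult_le_compat; auto; try apply Rabs_pos; apply Cmod_ge_0).
      nra. }
  assert (HH := MVT_C (fun tau => g (Cplus xi (Cmult (RtoC tau) D)))
                 (fun tau => Cmult D (gx (Cplus xi (Cmult (RtoC tau) D))))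
                 0 s (Cmult D (gx xi)) (Cmod D * (2 * M * s)) ltac:(lra)).
  assert (E0 : Cplus xi (Cmult (RtoC 0) D) = xi) by cext.
  rewrite Rminus_0_r, E0 in HH.
  assert (Cmod D * (2 * M * s) * 2 * s = 4 * Cmod D * M * s ^ 2) by ring.
  eapply Rle_trans. apply HH.
  - intros tau Htau. apply dline. apply G1. apply Hseg. lra.
  - apply rcont_seg. auto. intros; apply Hcseg; lra.
  - intros tau Htau. replace (Cminus (Cmult D (gx (Cplus xi (Cmult (RtoC tau) D)))) (Cmult D (gx xi)))
      with (Cmult D (Cminus (gx (Cplus xi (Cmult (RtoC tau) D))) (gx xi))) by ring.
    rewrite Cmod_mult. apply Rmult_le_compat_l. auto. eapply Rle_trans. apply HA. lra. nra.
  - lra.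
Qed.


Lemma loc_R (P : R -> Prop) r : 0 < r -> (forall t, Rabs t < r -> P t) -> locally 0 P.
Proof.
  intros Hr H. exists (mkposreal r Hr). intros y Hy. apply H.
  unfold ball in Hy; simpl in Hy; unfold AbsRing_ball, abs, minus, plus, opp in Hy; simpl in Hy.
  replace y with (y + - 0) by ring. exact Hy.
Qed.

Lemma Ci_sq : Cmult Ci Ci = Copp (RtoC 1).
Proof. cext. Qed.

Lemma Cmod_Ci : Cmod Ci = 1.
Proof. unfold Cmod. rewrite <- sqrt_1. f_equal. simpl. ring. Qed.

Lemma lap_zero N Nx Ny Nxx Nxy Nyx Nyy w :
  Good N Nx Ny Nxx Nxy Nyx Nyy -> udisc w -> Cplus (Nxx w) (Nyy w) = RtoC 0.
Proof.
  intros HG Hw. destruct HG as [G1 [G2 [G3 [G4 [G5 [G6 [G7 [G8 G9]]]]]]]].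
  assert (Hy : forall z, udisc z -> Ny z = Cmult Ci (Nx z)).
  { intros z Hz. destruct (holo_pd N z (Nx z) (G1 z Hz)) as [_ H1]. destruct (G2 z Hz) as [_ [H2 _]].
    unfold is_pdy in *. apply (dRC_unique _ _ _ _ H2 H1). }
  set (r := 1 - Cmod w). assert (Hr : 0 < r) by (unfold r, udisc in *; lra).
  assert (Hyx : Nyx w = Cmult Ci (Nxx w)).
  { destruct (G2 w Hw) as [_ [_ [A1 [_ [A2 _]]]]]. unfold is_pdx in *.
    apply (dRC_cmul _ Ci) in A1.
    assert (A3 : is_derive (fun t : R => Ny (Cplus w (RtoC t))) 0 (Cmult Ci (Nxx w))).
    { apply (is_derive_ext_loc (fun t : R => Cmult Ci (Nx (Cplus w (RtoC t))))). 2: exact A1.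
      apply (loc_R _ r Hr). intros t Ht. rewrite Hy; auto. apply (udisc_nbhd w Hw).
      replace (Cminus (Cplus w (RtoC t)) w) with (RtoC t) by ring. rewrite Cmod_R. exact Ht. }
    apply (dRC_unique _ _ _ _ A2 A3). }
  assert (Hyy : Nyy w = Cmult Ci (Nxy w)).
  { destruct (G2 w Hw) as [_ [_ [_ [A1 [_ A2]]]]]. unfold is_pdy in *.
    apply (dRC_cmul _ Ci) in A1.
    assert (A3 : is_derive (fun t : R => Ny (Cplus w (Cmult (RtoC t) Ci))) 0 (Cmult Ci (Nxy w))).
    { apply (is_derive_ext_loc (fun t : R => Cmult Ci (Nx (Cplus w (Cmult (RtoC t) Ci))))). 2: exact A1.
      apply (loc_R _ r Hr). intros t Ht. rewrite Hy; auto. apply (udisc_nbhd w Hw).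
      replace (Cminus (Cplus w (Cmult (RtoC t) Ci)) w) with (Cmult (RtoC t) Ci) by ring.
      rewrite Cmod_RtoC_mult. rewrite Cmod_Ci. unfold r in Ht. lra. }
    apply (dRC_unique _ _ _ _ A2 A3). }
  assert (Hcl : Nxy w = Nyx w).
  { apply (clairaut N Nx Ny Nxy Nyx w Hw); auto; intros z Hz; apply (G2 z Hz). }
  rewrite Hyy, Hcl, Hyx. rewrite Cmult_assoc, Ci_sq. ring.
Qed.

Ltac expnorm T := repeat match goal with |- context [exp (-5 * ?X)] =>
     lazymatch X with T => fail | _ => replace X with T by ring end end.

Definition vb (z : CC) : R := exp (-5 * (Re z ^ 2 + Im z ^ 2)) - exp (-5).
Definition vbx (z : CC) : R := -10 * Re z * exp (-5 * (Re z ^ 2 + Im z ^ 2)).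
Definition vby (z : CC) : R := -10 * Im z * exp (-5 * (Re z ^ 2 + Im z ^ 2)).
Definition vbxx (z : CC) : R := (100 * Re z ^ 2 - 10) * exp (-5 * (Re z ^ 2 + Im z ^ 2)).
Definition vbyy (z : CC) : R := (100 * Im z ^ 2 - 10) * exp (-5 * (Re z ^ 2 + Im z ^ 2)).

Lemma vb_dx w t : is_derive (fun s => vb (Cplus w (RtoC s))) t (vbx (Cplus w (RtoC t))).
Proof.
  unfold vb, vbx. destruct w as [a b].
  apply (is_derive_ext (fun s => exp (-5 * ((a + s) ^ 2 + b ^ 2)) - exp (-5))).
  { intros s. replace (Cplus (a, b) (RtoC s)) with ((a + s, b) : CC) by cext. reflexivity. }
  replace (Re (Cplus (a, b) (RtoC t))) with (a + t) by (unfold Re; simpl; ring).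
  replace (Im (Cplus (a, b) (RtoC t))) with b by (unfold Im; simpl; ring).
  auto_derive. auto. expnorm ((a + t) ^ 2 + b ^ 2). ring.
Qed.

Lemma vbx_dx w : is_derive (fun s => vbx (Cplus w (RtoC s))) 0 (vbxx w).
Proof.
  unfold vbx, vbxx. destruct w as [a b].
  apply (is_derive_ext (fun s => -10 * (a + s) * exp (-5 * ((a + s) ^ 2 + b ^ 2)))).
  { intros s. replace (Cplus (a, b) (RtoC s)) with ((a + s, b) : CC) by cext. reflexivity. }
  unfold Re, Im; simpl. auto_derive. auto. expnorm ((a + 0) ^ 2 + b ^ 2). replace (a + 0) with a by ring. ring.
Qed.

Lemma vb_dy w t : is_derive (fun s => vb (Cplus w (Cmult (RtoC s) Ci))) t (vby (Cplus w (Cmult (RtoC t) Ci))).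
Proof.
  unfold vb, vby. destruct w as [a b].
  apply (is_derive_ext (fun s => exp (-5 * (a ^ 2 + (b + s) ^ 2)) - exp (-5))).
  { intros s. replace (Cplus (a, b) (Cmult (RtoC s) Ci)) with ((a, b + s) : CC) by cext. reflexivity. }
  replace (Re (Cplus (a, b) (Cmult (RtoC t) Ci))) with a by (unfold Re; simpl; ring).
  replace (Im (Cplus (a, b) (Cmult (RtoC t) Ci))) with (b + t) by (unfold Im; simpl; ring).
  auto_derive. auto. expnorm (a ^ 2 + (b + t) ^ 2). ring.
Qed.

Lemma vby_dy w : is_derive (fun s => vby (Cplus w (Cmult (RtoC s) Ci))) 0 (vbyy w).
Proof.
  unfold vby, vbyy. destruct w as [a b].
  apply (is_derive_ext (fun s => -10 * (b + s) * exp (-5 * (a ^ 2 + (b + s) ^ 2)))).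
  { intros s. replace (Cplus (a, b) (Cmult (RtoC s) Ci)) with ((a, b + s) : CC) by cext. reflexivity. }
  unfold Re, Im; simpl. auto_derive. auto. expnorm (a ^ 2 + (b + 0) ^ 2). replace (b + 0) with b by ring. ring.
Qed.

Lemma exp_lip0 u v : 0 <= u -> u <= v -> Rabs (exp (- u) - exp (- v)) <= Rabs (u - v).
Proof.
  intros Hu Huv.
  assert (E : exp (- v) = exp (- u) * exp (- (v - u))) by (rewrite <- exp_plus; f_equal; ring).
  assert (H1 := exp_ineq1_le (- (v - u))). assert (H2 : exp (- u) <= 1).
  { rewrite <- exp_0. destruct (Req_dec u 0). subst. rewrite Ropp_0. lra. left. apply exp_increasing. lra. }
  assert (H3 : 0 < exp (- u)) by apply exp_pos. assert (H4 : 0 < exp (- (v - u))) by apply exp_pos.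
  assert (H5 : exp (- (v - u)) <= 1).
  { rewrite <- exp_0. destruct (Req_dec (v - u) 0). rewrite H, Ropp_0. lra. left. apply exp_increasing. lra. }
  rewrite E. rewrite Rabs_right by nra. rewrite Rabs_left1 by lra. nra.
Qed.

Lemma exp_lip u v : 0 <= u -> 0 <= v -> Rabs (exp (- u) - exp (- v)) <= Rabs (u - v).
Proof.
  intros Hu Hv. destruct (Rle_lt_dec u v). apply exp_lip0; auto.
  rewrite Rabs_minus_sym, (Rabs_minus_sym u). apply exp_lip0; lra.
Qed.

Lemma vb_lip z w : Cmod z <= 1 -> Cmod w <= 1 -> Rabs (vb w - vb z) <= 10 * Cmod (Cminus w z).
Proof.
  intros Hz Hw. unfold vb.
  replace (exp (-5 * (Re w ^ 2 + Im w ^ 2)) - exp (-5) - (exp (-5 * (Re z ^ 2 + Im z ^ 2)) - exp (-5)))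
    with (exp (- (5 * (Re w ^ 2 + Im w ^ 2))) - exp (- (5 * (Re z ^ 2 + Im z ^ 2)))).
  2: { replace (- (5 * (Re w ^ 2 + Im w ^ 2))) with (-5 * (Re w ^ 2 + Im w ^ 2)) by ring.
       replace (- (5 * (Re z ^ 2 + Im z ^ 2))) with (-5 * (Re z ^ 2 + Im z ^ 2)) by ring. ring. }
  eapply Rle_trans. apply exp_lip. nra. nra.
  rewrite <- !Cmod_sqr.
  replace (5 * Cmod w ^ 2 - 5 * Cmod z ^ 2) with (5 * ((Cmod w + Cmod z) * (Cmod w - Cmod z))) by ring.
  rewrite !Rabs_mult. rewrite (Rabs_right 5) by lra.
  assert (Rabs (Cmod w - Cmod z) <= Cmod (Cminus w z)).
  { apply Rabs_le. split.
    - assert (Cmod z <= Cmod w + Cmod (Cminus z w)).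
      { replace z with (Cplus w (Cminus z w)) at 1 by ring. apply Cmod_triangle. }
      replace (Cminus z w) with (Copp (Cminus w z)) in H by ring. rewrite Cmod_opp in H. lra.
    - assert (Cmod w <= Cmod z + Cmod (Cminus w z)).
      { replace w with (Cplus z (Cminus w z)) at 1 by ring. apply Cmod_triangle. }
      lra. }
  pose proof (Cmod_ge_0 z). pose proof (Cmod_ge_0 w).
  rewrite (Rabs_right (Cmod w + Cmod z)) by lra.
  pose proof (Rabs_pos (Cmod w - Cmod z)). nra.
Qed.

Lemma vb_le1 z : vb z < 1.
Proof.
  unfold vb. assert (exp (-5 * (Re z ^ 2 + Im z ^ 2)) <= 1).
  { rewrite <- exp_0. destruct (Req_dec (Re z ^ 2 + Im z ^ 2) 0). rewrite H. rewrite Rmult_0_r. lra.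
    left. apply exp_increasing. assert (0 <= Re z ^ 2 + Im z ^ 2) by nra. nra. }
  pose proof (exp_pos (-5)). lra.
Qed.

Lemma vb_unit z : Cmod z = 1 -> vb z = 0.
Proof. intros H. unfold vb. rewrite <- Cmod_sqr, H. replace (-5 * 1 ^ 2) with (-5) by ring. ring. Qed.

Lemma lap_vb z : 1 / 2 < Cmod z -> 0 < vbxx z + vbyy z.
Proof.
  intros H. unfold vbxx, vbyy.
  assert (Cmod z ^ 2 > 1 / 4) by nra. rewrite Cmod_sqr in H0.
  pose proof (exp_pos (-5 * (Re z ^ 2 + Im z ^ 2))). nra.
Qed.


Lemma Re_minus' (a b : CC) : Re (Cminus a b) = Re a - Re b.
Proof. destruct a, b. unfold Re; simpl. ring. Qed.

Lemma Cmod_shift_le (z : CC) (w : CC) : Rabs (Cmod (Cplus z w) - Cmod z) <= Cmod w.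
Proof.
  apply Rabs_le. split.
  - assert (Cmod z <= Cmod (Cplus z w) + Cmod w).
    { replace z with (Cplus (Cplus z w) (Copp w)) at 1 by ring. eapply Rle_trans. apply Cmod_triangle. rewrite Cmod_opp. lra. }
    lra.
  - assert (H := Cmod_triangle z w). lra.
Qed.

Lemma hopf N Nx Ny Nxx Nxy Nyx Nyy xi :
  Good N Nx Ny Nxx Nxy Nyx Nyy -> Cmod xi = 1 -> N xi = RtoC 1 ->
  (forall z, cudisc z -> Re (N z) <= 1) -> (forall z, udisc z -> Re (N z) < 1) ->
  0 < Re (Cmult xi (Nx xi)).
Proof.
  intros HG Hxi HN1 Hle Hlt. assert (HG' := HG).
  destruct HG' as [G1 [G2 [G3 [G4 [G5 [G6 [G7 [G8 G9]]]]]]]].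
  assert (HcN : forall r1 r2, r2 <= 1 -> forall z, Ann r1 r2 z -> forall eps, 0 < eps -> exists delta, 0 < delta /\
     forall w, Ann r1 r2 w -> Cmod (Cminus w z) < delta -> Rabs (Re (N w) - Re (N z)) < eps).
  { intros r1 r2 Hr2 z Hz eps He. destruct (G3 z ltac:(unfold cudisc, Ann in *; lra) eps He) as [d [Hd H]].
    exists d. split; auto. intros w Hw Hwz. eapply Rle_lt_trans. 2: apply (H w); auto.
    rewrite <- Re_minus'. apply re_le_Cmod. unfold cudisc, Ann in *; lra. }
  destruct (evt_annulus (fun z => Re (N z)) (1/2) (1/2) ltac:(lra) (HcN (1/2) (1/2) ltac:(lra))) as [z1 [Hz1 Hmax1]].
  assert (Hz1d : Re (N z1) < 1) by (apply Hlt; unfold udisc, Ann in *; lra).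
  set (eps := (1 - Re (N z1)) / 2). assert (Heps : 0 < eps) by (unfold eps; lra).
  set (W := fun z => Re (N z) - 1 + eps * vb z).
  assert (HcW : forall z, Ann (1/2) 1 z -> forall e, 0 < e -> exists delta, 0 < delta /\
     forall w, Ann (1/2) 1 w -> Cmod (Cminus w z) < delta -> Rabs (W w - W z) < e).
  { intros z Hz e He. destruct (HcN (1/2) 1 ltac:(lra) z Hz (e/2) ltac:(lra)) as [d [Hd H]].
    exists (Rmin d (e / (2 * (10 * eps + 1)))). split. apply Rmin_pos. auto. apply Rdiv_lt_0_compat; lra.
    intros w Hw Hwz. specialize (H w Hw (Rlt_le_trans _ _ _ Hwz (Rmin_l _ _))).
    assert (Hv := vb_lip z w ltac:(unfold Ann in *; lra) ltac:(unfold Ann in *; lra)).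
    assert (Hm : Cmod (Cminus w z) < e / (2 * (10 * eps + 1))) by (eapply Rlt_le_trans; [exact Hwz|apply Rmin_r]).
    unfold W. replace (Re (N w) - 1 + eps * vb w - (Re (N z) - 1 + eps * vb z)) with ((Re (N w) - Re (N z)) + eps * (vb w - vb z)) by ring.
    eapply Rle_lt_trans. apply Rabs_triang. rewrite Rabs_mult, (Rabs_right eps) by lra.
    assert (Cmod (Cminus w z) * (2 * (10 * eps + 1)) < e).
    { apply Rmult_lt_compat_r with (r := 2 * (10 * eps + 1)) in Hm. 2: lra.
      unfold Rdiv in Hm. rewrite Rmult_assoc, Rinv_l in Hm by lra. lra. }
    pose proof (Cmod_ge_0 (Cminus w z)). nra. }
  destruct (evt_annulus W (1/2) 1 ltac:(lra) HcW) as [zs [Hzs Hmax]].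
  assert (Wle : forall z, Ann (1/2) 1 z -> W z <= 0).
  { intros z Hz. eapply Rle_trans. apply Hmax; auto. apply Rnot_lt_le. intros Hpos.
    unfold Ann in Hzs. destruct (Req_dec (Cmod zs) (1/2)) as [E1|E1].
    { assert (Re (N zs) <= Re (N z1)) by (apply Hmax1; unfold Ann; lra).
      assert (vb zs < 1) by apply vb_le1. unfold W in Hpos. unfold eps in *. nra. }
    destruct (Req_dec (Cmod zs) 1) as [E2|E2].
    { unfold W in Hpos. rewrite (vb_unit zs E2) in Hpos. assert (Re (N zs) <= 1) by (apply Hle; unfold cudisc; lra). lra. }
    assert (Hin : 1/2 < Cmod zs < 1) by lra.
    set (r := Rmin (Cmod zs - 1/2) (1 - Cmod zs)).
    assert (Hr : 0 < r) by (apply Rmin_pos; lra).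
    assert (Hrr : forall t, Rabs t < r -> 1/2 < Cmod (Cplus zs (RtoC t)) < 1 /\ 1/2 < Cmod (Cplus zs (Cmult (RtoC t) Ci)) < 1).
    { intros t Ht. assert (H1 := Cmod_shift_le zs (RtoC t)). assert (H2 := Cmod_shift_le zs (Cmult (RtoC t) Ci)).
      rewrite Cmod_R in H1. rewrite Cmod_RtoC_mult, Cmod_Ci in H2.
      pose proof (Rmin_l (Cmod zs - 1/2) (1 - Cmod zs)). pose proof (Rmin_r (Cmod zs - 1/2) (1 - Cmod zs)).
      apply Rabs_le_between in H1. apply Rabs_le_between in H2. fold r in H, H0. lra. }
    assert (E0 : Cplus zs (RtoC 0) = zs) by cext.
    assert (E0' : Cplus zs (Cmult (RtoC 0) Ci) = zs) by cext.
    assert (Hzsd : udisc zs) by (unfold udisc; lra).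
    assert (Qx : Re (Nxx zs) + eps * vbxx zs <= 0).
    { apply (second_deriv_test (fun t => W (Cplus zs (RtoC t)))
               (fun t => Re (Nx (Cplus zs (RtoC t))) + eps * vbx (Cplus zs (RtoC t))) r); auto.
      - intros t Ht. rewrite E0. apply Hmax. unfold Ann. destruct (Hrr t Ht). lra.
      - intros t Ht. destruct (Hrr t Ht) as [[Ha Hb] _].
        assert (D1 : is_derive (fun s => Re (N (Cplus zs (RtoC s)))) t (Re (Nx (Cplus zs (RtoC t))))).
        { apply dRC_Re. apply pdx_line. apply G2. unfold udisc; lra. }
        assert (D2 := vb_dx zs t).
        unfold W. replace (Re (Nx (Cplus zs (RtoC t))) + eps * vbx (Cplus zs (RtoC t)))
          with (plus (minus (Re (Nx (Cplus zs (RtoC t)))) zero) (eps * vbx (Cplus zs (RtoC t)))).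
        2: { unfold minus, zero, opp; simpl. unfold plus. simpl. ring. }
        apply (is_derive_plus (fun s => minus (Re (N (Cplus zs (RtoC s)))) 1) (fun s => eps * vb (Cplus zs (RtoC s)))).
        apply (is_derive_minus (fun s => Re (N (Cplus zs (RtoC s)))) (fun _ => 1)). exact D1. apply (@is_derive_const R_AbsRing R_NormedModule). apply is_derive_scal. exact D2.
      - assert (D3 : is_derive (fun s => Re (Nx (Cplus zs (RtoC s)))) 0 (Re (Nxx zs))).
        { apply dRC_Re. apply (G2 zs Hzsd). }
        apply (is_derive_plus (fun s => Re (Nx (Cplus zs (RtoC s)))) (fun s => eps * vbx (Cplus zs (RtoC s)))).
        exact D3. apply is_derive_scal. apply vbx_dx. }
    assert (Qy : Re (Nyy zs) + eps * vbyy zs <= 0).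
    { apply (second_deriv_test (fun t => W (Cplus zs (Cmult (RtoC t) Ci)))
               (fun t => Re (Ny (Cplus zs (Cmult (RtoC t) Ci))) + eps * vby (Cplus zs (Cmult (RtoC t) Ci))) r); auto.
      - intros t Ht. rewrite E0'. apply Hmax. unfold Ann. destruct (Hrr t Ht). lra.
      - intros t Ht. destruct (Hrr t Ht) as [_ [Ha Hb]].
        assert (D1 : is_derive (fun s => Re (N (Cplus zs (Cmult (RtoC s) Ci)))) t (Re (Ny (Cplus zs (Cmult (RtoC t) Ci))))).
        { apply dRC_Re. apply pdy_line. apply G2. unfold udisc; lra. }
        assert (D2 := vb_dy zs t).
        unfold W. replace (Re (Ny (Cplus zs (Cmult (RtoC t) Ci))) + eps * vby (Cplus zs (Cmult (RtoC t) Ci)))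
          with (plus (minus (Re (Ny (Cplus zs (Cmult (RtoC t) Ci)))) zero) (eps * vby (Cplus zs (Cmult (RtoC t) Ci)))).
        2: { unfold minus, zero, opp; simpl. unfold plus. simpl. ring. }
        apply (is_derive_plus (fun s => minus (Re (N (Cplus zs (Cmult (RtoC s) Ci)))) 1) (fun s => eps * vb (Cplus zs (Cmult (RtoC s) Ci)))).
        apply (is_derive_minus (fun s => Re (N (Cplus zs (Cmult (RtoC s) Ci)))) (fun _ => 1)). exact D1. apply (@is_derive_const R_AbsRing R_NormedModule). apply is_derive_scal. exact D2.
      - assert (D3 : is_derive (fun s => Re (Ny (Cplus zs (Cmult (RtoC s) Ci)))) 0 (Re (Nyy zs))).
        { apply dRC_Re. apply (G2 zs Hzsd). }
        apply (is_derive_plus (fun s => Re (Ny (Cplus zs (Cmult (RtoC s) Ci)))) (fun s => eps * vby (Cplus zs (Cmult (RtoC s) Ci)))).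
        exact D3. apply is_derive_scal. apply vby_dy. }
    assert (HL := lap_zero N Nx Ny Nxx Nxy Nyx Nyy zs HG Hzsd).
    assert (HR : Re (Nxx zs) + Re (Nyy zs) = 0).
    { assert (Re (Cplus (Nxx zs) (Nyy zs)) = 0) by (rewrite HL; reflexivity). simpl in H. exact H. }
    assert (HV := lap_vb zs ltac:(lra)). nra. }
  destruct (taylor2 N Nx Ny Nxx Nxy Nyx Nyy xi (Copp xi) HG ltac:(unfold cudisc; lra)) as [K [HK [s0 [Hs0 HT]]]].
  set (c := 5 * eps * exp (-5)). assert (Hc : 0 < c) by (unfold c; pose proof (exp_pos (-5)); nra).
  set (s := Rmin s0 (Rmin (1/2) (c / (2 * (K + 1))))).
  assert (Hs : 0 < s) by (unfold s; repeat apply Rmin_pos; try lra; apply Rdiv_lt_0_compat; lra).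
  assert (Hs1 : s <= s0) by apply Rmin_l.
  assert (Hs2 : s <= 1/2) by (eapply Rle_trans; [apply Rmin_r|apply Rmin_l]).
  assert (Hs3 : s <= c / (2 * (K + 1))) by (eapply Rle_trans; [apply Rmin_r|apply Rmin_r]).
  set (zz := Cplus xi (Cmult (RtoC s) (Copp xi))).
  assert (Ezz : zz = Cmult (RtoC (1 - s)) xi) by (unfold zz; rewrite RtoC_minus; ring).
  assert (Hmz : Cmod zz = 1 - s) by (rewrite Ezz, Cmod_RtoC_mult, Hxi, Rabs_right; lra).
  assert (Hzd : udisc zz) by (unfold udisc; lra).
  specialize (HT s ltac:(lra) Hzd). fold zz in HT.
  assert (HW := Wle zz ltac:(unfold Ann; lra)). unfold W in HW.
  assert (Hvb : exp (-5) * 5 * s <= vb zz).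
  { unfold vb. rewrite <- Cmod_sqr, Hmz.
    replace (-5 * (1 - s) ^ 2) with (-5 + 5 * (2 * s - s ^ 2)) by ring. rewrite exp_plus.
    assert (H1 := exp_ineq1_le (5 * (2 * s - s ^ 2))). pose proof (exp_pos (-5)).
    assert (H3 : 1 + 5 * s <= exp (5 * (2 * s - s ^ 2))) by nra.
    assert (H4 : exp (-5) * (1 + 5 * s) <= exp (-5) * exp (5 * (2 * s - s ^ 2))) by (apply Rmult_le_compat_l; lra).
    lra. }
  assert (HRe : Re (N zz) >= 1 - s * Re (Cmult xi (Nx xi)) - K * s ^ 2).
  { assert (H1 := re_le_Cmod (Cminus (Cminus (N zz) (N xi)) (Cmult (RtoC s) (Cmult (Copp xi) (Nx xi))))).
    assert (E : Re (Cminus (Cminus (N zz) (N xi)) (Cmult (RtoC s) (Cmult (Copp xi) (Nx xi)))) =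
                Re (N zz) - 1 + s * Re (Cmult xi (Nx xi))).
    { rewrite HN1. set (A := N zz). set (B := Nx xi). clearbody A B. destruct A, B, xi. unfold Re; simpl. ring. }
    rewrite E in H1. apply Rabs_le_between in H1. lra. }
  set (ga := Re (Cmult xi (Nx xi))) in *.
  assert (K * s <= c / 2).
  { assert (K * s <= K * (c / (2 * (K + 1)))) by (apply Rmult_le_compat_l; lra).
    assert (K * (c / (2 * (K + 1))) <= c / 2).
    { unfold Rdiv. apply Rmult_le_reg_r with (2 * (K + 1)). lra.
      replace (K * (c * / (2 * (K + 1))) * (2 * (K + 1))) with (K * c) by (field; lra).
      replace (c * / 2 * (2 * (K + 1))) with (c * (K + 1)) by (field; lra). nra. }
    lra. }
  assert (eps * vb zz >= c * s) by (unfold c; nra).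
  nra.
Qed.


Lemma knormsq_pair d f z w :
  knormsq (kf d f) [(RtoC 1, z); (Copp (RtoC 1), w)] =
  Re (Cplus (Cminus (kf d f z z) (kf d f z w)) (Cminus (kf d f w w) (kf d f w z))).
Proof.
  rewrite knormsq_Bf. unfold Bf. rewrite !lsum_cons, !lsum_nil. simpl fst. simpl snd.
  replace (Cconj (RtoC 1)) with (RtoC 1) by cext.
  replace (Cconj (Copp (RtoC 1))) with (Copp (RtoC 1)) by cext.
  f_equal. ring.
Qed.

Lemma Cinv_diff (a c : CC) : a <> RtoC 0 -> c <> RtoC 0 ->
  Cmod (Cminus (Cinv a) (Cinv c)) = Cmod (Cminus c a) / (Cmod a * Cmod c).
Proof.
  intros Ha Hc. replace (Cminus (Cinv a) (Cinv c)) with (Cdiv (Cminus c a) (Cmult a c)) by (field; auto).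
  rewrite Cmod_div. rewrite Cmod_mult. auto. apply Cmult_neq_0; auto.
Qed.

Lemma inv_diff_bound (a c : CC) s C1 : 0 < s -> s <= Cmod a -> C1 * s <= 1/2 -> 0 <= C1 ->
  Cmod (Cminus c a) <= C1 * s ^ 2 -> Cmod (Cminus (Cinv a) (Cinv c)) <= 2 * C1.
Proof.
  intros Hs Ha HC HC0 Hca.
  assert (Hc : s / 2 <= Cmod c).
  { assert (Cmod a <= Cmod c + Cmod (Cminus c a)).
    { replace a with (Cminus c (Cminus c a)) at 1 by ring. unfold Cminus at 1. eapply Rle_trans. apply Cmod_triangle. rewrite Cmod_opp. lra. }
    nra. }
  rewrite Cinv_diff. 
  2: { intro E. rewrite E, Cmod_0 in Ha. lra. }
  2: { intro E. rewrite E, Cmod_0 in Hc. lra. }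
  assert (0 < Cmod a * Cmod c) by (apply Rmult_lt_0_compat; lra).
  apply Rmult_le_reg_r with (Cmod a * Cmod c). auto. unfold Rdiv. rewrite Rmult_assoc, Rinv_l by lra. rewrite Rmult_1_r.
  assert (s * (s / 2) <= Cmod a * Cmod c) by (apply Rmult_le_compat; lra).
  nra.
Qed.

Lemma inner_expand d x p : inner d x x =
  Cminus (Cplus (Cplus (inner d (fun i => Cminus (x i) (p i)) (fun i => Cminus (x i) (p i))) (inner d x p)) (inner d p x)) (inner d p p).
Proof. rewrite !inner_minus_l, !inner_minus_r. ring. Qed.

Lemma rsum_bound_prod d (a b : nat -> R) A Bb : (forall i, (i < d)%nat -> 0 <= a i <= A) -> (forall i, (i < d)%nat -> 0 <= b i <= Bb) ->
  rsum d (fun i => a i * b i) <= INR d * (A * Bb).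
Proof.
  intros Ha Hb. rewrite <- rsum_const. apply rsum_le. intros i Hi. specialize (Ha i Hi). specialize (Hb i Hi). nra.
Qed.

Lemma pair_bound d (x y p : nat -> CC) s L K :
  0 < s -> 0 <= L -> 0 <= K -> inner d p p = RtoC 1 ->
  (forall i, (i < d)%nat -> Cmod (Cminus (x i) (p i)) <= L * s) ->
  (forall i, (i < d)%nat -> Cmod (Cminus (y i) (p i)) <= L * s) ->
  Cmod (Cminus (inner d x p) (RtoC (1 - s))) <= K * s ^ 2 ->
  Cmod (Cminus (inner d y p) (RtoC (1 - s))) <= K * s ^ 2 ->
  (2 * K + INR d * L ^ 2) * s <= 1/2 ->
  (2 * INR d * L ^ 2 + 2 * K) * s <= 1/2 ->
  Re (Cplus (Cminus (Cinv (Cminus (RtoC 1) (inner d x x))) (Cinv (Cminus (RtoC 1) (inner d x y))))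
            (Cminus (Cinv (Cminus (RtoC 1) (inner d y y))) (Cinv (Cminus (RtoC 1) (inner d y x)))))
   <= 4 * (2 * INR d * L ^ 2 + 2 * K).
Proof.
  intros Hs HL HK Hpp Hx Hy HNx HNy Hs1 Hs2.
  set (C1 := 2 * INR d * L ^ 2 + 2 * K).
  assert (Hd : 0 <= INR d) by apply pos_INR.
  assert (HC1 : 0 <= C1) by (unfold C1; nra).
  set (u := fun i => Cminus (x i) (p i)). set (v := fun i => Cminus (y i) (p i)).
  assert (Hdepth : forall (z : nat -> CC), (forall i, (i < d)%nat -> Cmod (Cminus (z i) (p i)) <= L * s) ->
            Cmod (Cminus (inner d z p) (RtoC (1 - s))) <= K * s ^ 2 ->
            s <= Cmod (Cminus (RtoC 1) (inner d z z))).
  { intros z Hz HNz.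
    rewrite (inner_expand d z p). rewrite Hpp. rewrite <- (inner_conj d z p).
    set (U := inner d (fun i => Cminus (z i) (p i)) (fun i => Cminus (z i) (p i))).
    set (Nz := inner d z p) in *.
    assert (HU : Re U <= INR d * (L * s) ^ 2).
    { unfold U. rewrite inner_diag_Re. eapply Rle_trans. 
      apply (rsum_le _ _ (fun _ => (L * s) ^ 2)). intros i Hi. cbv beta. specialize (Hz i Hi).
      pose proof (Cmod_ge_0 (Cminus (z i) (p i))). apply pow_incr. lra. rewrite rsum_const. lra. }
    assert (HReN : Re Nz <= 1 - s + K * s ^ 2).
    { assert (H1 := re_le_Cmod (Cminus Nz (RtoC (1 - s)))). rewrite Re_minus in H1. rewrite re_RtoC in H1.
      apply Rabs_le_between in H1. lra. }
    eapply Rle_trans. 2: apply re_le_Cmod. eapply Rle_trans. 2: apply Rle_abs.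
    replace (Re (Cminus (RtoC 1) (Cminus (Cplus (Cplus U Nz) (Cconj Nz)) (RtoC 1)))) with (2 - Re U - 2 * Re Nz).
    2: { destruct U, Nz. unfold Re; simpl. ring. }
    assert (INR d * (L * s) ^ 2 = INR d * L ^ 2 * s * s) by ring. nra. }
  assert (HA := Hdepth x Hx HNx). assert (HB := Hdepth y Hy HNy).
  assert (Hcross : forall (z t : nat -> CC), (forall i, (i < d)%nat -> Cmod (Cminus (z i) (p i)) <= L * s) ->
            (forall i, (i < d)%nat -> Cmod (Cminus (t i) (p i)) <= L * s) ->
            Cmod (Cminus (inner d z p) (RtoC (1 - s))) <= K * s ^ 2 ->
            Cmod (Cminus (inner d t p) (RtoC (1 - s))) <= K * s ^ 2 ->
            Cmod (Cminus (Cminus (RtoC 1) (inner d z t)) (Cminus (RtoC 1) (inner d z z))) <= C1 * s ^ 2).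
  { intros z t Hz Ht HNz HNt.
    replace (Cminus (Cminus (RtoC 1) (inner d z t)) (Cminus (RtoC 1) (inner d z z)))
      with (Cplus (inner d (fun i => Cminus (z i) (p i)) (fun i => Cminus (z i) (t i)))
                  (Cconj (Cminus (inner d z p) (inner d t p)))).
    2: { rewrite Cminus_conj, !inner_conj. rewrite !inner_minus_l, !inner_minus_r. ring. }
    eapply Rle_trans. apply Cmod_triangle. rewrite Cmod_conj.
    assert (H1 : Cmod (inner d (fun i => Cminus (z i) (p i)) (fun i => Cminus (z i) (t i))) <= INR d * ((L * s) * (2 * L * s))).
    { eapply Rle_trans. apply inner_bound. apply rsum_bound_prod.
      - intros i Hi. split. apply Cmod_ge_0. auto.
      - intros i Hi. split. apply Cmod_ge_0.
        replace (Cminus (z i) (t i)) with (Cminus (Cminus (z i) (p i)) (Cminus (t i) (p i))) by ring.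
        unfold Cminus at 1. eapply Rle_trans. apply Cmod_triangle. rewrite Cmod_opp.
        specialize (Hz i Hi). specialize (Ht i Hi). lra. }
    assert (H2 : Cmod (Cminus (inner d z p) (inner d t p)) <= 2 * K * s ^ 2).
    { replace (Cminus (inner d z p) (inner d t p)) with (Cminus (Cminus (inner d z p) (RtoC (1 - s))) (Cminus (inner d t p) (RtoC (1 - s)))) by ring.
      unfold Cminus at 1. eapply Rle_trans. apply Cmod_triangle. rewrite Cmod_opp. lra. }
    unfold C1. nra. }
  assert (H1 := Hcross x y Hx Hy HNx HNy). assert (H2 := Hcross y x Hy Hx HNy HNx).
  assert (Hb1 := inv_diff_bound _ _ s C1 Hs HA ltac:(unfold C1 in *; lra) HC1 H1).
  assert (Hb2 := inv_diff_bound _ _ s C1 Hs HB ltac:(unfold C1 in *; lra) HC1 H2).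
  set (X := Cminus (Cinv (Cminus (RtoC 1) (inner d x x))) (Cinv (Cminus (RtoC 1) (inner d x y)))) in *.
  set (Y := Cminus (Cinv (Cminus (RtoC 1) (inner d y y))) (Cinv (Cminus (RtoC 1) (inner d y x)))) in *.
  change (Re (Cplus X Y)) with (Re X + Re Y).
  assert (R1 := re_le_Cmod X). assert (R2 := re_le_Cmod Y).
  pose proof (Rle_abs (Re X)). pose proof (Rle_abs (Re Y)). lra.
Qed.


Ltac clear_body_all := repeat match goal with H := _ |- _ => clearbody H end.

Lemma fin_unif (P : nat -> R -> R -> Prop) n :
  (forall i L L' s s', P i L s -> L <= L' -> 0 < s' <= s -> P i L' s') ->
  (forall i, (i < n)%nat -> exists L s, 0 <= L /\ 0 < s /\ P i L s) ->
  exists L s, 0 <= L /\ 0 < s /\ forall i, (i < n)%nat -> P i L s.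
Proof.
  intros Hm. induction n; intros H.
  - exists 0, 1. split. lra. split. lra. intros; lia.
  - destruct IHn as [L [s [HL [Hs HP]]]]. intros; apply H; lia.
    destruct (H n ltac:(lia)) as [L' [s' [HL' [Hs' HP']]]].
    exists (Rmax L L'), (Rmin s s'). split. eapply Rle_trans. exact HL. apply Rmax_l.
    split. apply Rmin_pos; auto. intros i Hi. destruct (Nat.eq_dec i n).
    + subst. eapply Hm. exact HP'. apply Rmax_r. split. apply Rmin_pos; auto. apply Rmin_r.
    + eapply Hm. apply HP. lia. apply Rmax_l. split. apply Rmin_pos; auto. apply Rmin_l.
Qed.

Lemma Re_inv_pos (g : CC) : 0 < Re g -> 0 < Re (Cinv g).
Proof.
  intros H. destruct g as [a b]. unfold Cinv, Re in *; simpl in *.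
  apply Rdiv_lt_0_compat. auto. nra.
Qed.

Lemma dir_in (xi w : CC) s : Cmod xi = 1 -> 0 < Re w -> 0 < s -> s <= Re w / (Cmod w ^ 2) / 2 ->
  udisc (Cplus xi (Cmult (RtoC s) (Copp (Cmult xi w)))).
Proof.
  intros Hxi Hw Hs Hs2. unfold udisc.
  replace (Cplus xi (Cmult (RtoC s) (Copp (Cmult xi w)))) with (Cmult xi (Cminus (RtoC 1) (Cmult (RtoC s) w))) by ring.
  rewrite Cmod_mult, Hxi, Rmult_1_l.
  assert (Hwn : 0 < Cmod w ^ 2). { rewrite Cmod_sqr. nra. }
  assert (E : Cmod (Cminus (RtoC 1) (Cmult (RtoC s) w)) ^ 2 = 1 - 2 * s * Re w + s ^ 2 * Cmod w ^ 2).
  { rewrite !Cmod_sqr. destruct w as [a b]. unfold Re, Im; simpl. ring. }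
  assert (Hw0 : Cmod w <> 0) by (intro E0; rewrite E0 in Hwn; simpl in Hwn; lra).
  assert (s * Cmod w ^ 2 <= Re w / 2).
  { apply Rmult_le_compat_r with (r := Cmod w ^ 2) in Hs2. 2: lra.
    replace (Re w / Cmod w ^ 2 / 2 * Cmod w ^ 2) with (Re w / 2) in Hs2 by (field; auto). lra. }
  assert (Cmod (Cminus (RtoC 1) (Cmult (RtoC s) w)) ^ 2 < 1) by nra.
  pose proof (Cmod_ge_0 (Cminus (RtoC 1) (Cmult (RtoC s) w))). nra.
Qed.

Lemma lip_from_taylor g gx gy gxx gxy gyx gyy xi D :
  Good g gx gy gxx gxy gyx gyy -> cudisc xi ->
  exists L s0, 0 <= L /\ 0 < s0 /\ forall s, 0 < s <= s0 -> udisc (Cplus xi (Cmult (RtoC s) D)) ->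
     Cmod (Cminus (g (Cplus xi (Cmult (RtoC s) D))) (g xi)) <= L * s.
Proof.
  intros HG Hxi. destruct (taylor2 g gx gy gxx gxy gyx gyy xi D HG Hxi) as [K [HK [s0 [Hs0 HT]]]].
  exists (Cmod (Cmult D (gx xi)) + K), (Rmin s0 1). split. pose proof (Cmod_ge_0 (Cmult D (gx xi))); lra.
  split. apply Rmin_pos; lra. intros s Hs Hz.
  assert (Hs1 : s <= s0) by (eapply Rle_trans; [apply Hs|apply Rmin_l]).
  assert (Hs2 : s <= 1) by (eapply Rle_trans; [apply Hs|apply Rmin_r]).
  specialize (HT s ltac:(lra) Hz).
  replace (Cminus (g (Cplus xi (Cmult (RtoC s) D))) (g xi)) with
    (Cplus (Cminus (Cminus (g (Cplus xi (Cmult (RtoC s) D))) (g xi)) (Cmult (RtoC s) (Cmult D (gx xi)))) (Cmult (RtoC s) (Cmult D (gx xi)))) by ring.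
  eapply Rle_trans. apply Cmod_triangle. rewrite Cmod_RtoC_mult, Rabs_right by lra.
  assert (K * s ^ 2 <= K * s) by (apply Rmult_le_compat_l; [lra|nra]). nra.
Qed.

Lemma geo d (f : CC -> nat -> CC) (p : nat -> CC) xi zeta N Nx Ny Nxx Nxy Nyx Nyy :
  (forall i, (i < d)%nat -> exists gx gy gxx gxy gyx gyy, Good (fun z => f z i) gx gy gxx gxy gyx gyy) ->
  Good N Nx Ny Nxx Nxy Nyx Nyy -> (forall z, N z = inner d (f z) p) -> inner d p p = RtoC 1 ->
  (forall i, (i < d)%nat -> f xi i = p i) -> (forall i, (i < d)%nat -> f zeta i = p i) ->
  Cmod xi = 1 -> Cmod zeta = 1 ->
  0 < Re (Cmult xi (Nx xi)) -> 0 < Re (Cmult zeta (Nx zeta)) ->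
  exists C, forall delta, 0 < delta -> exists z w, udisc z /\ udisc w /\
    Cmod (Cminus z xi) < delta /\ Cmod (Cminus w zeta) < delta /\
    knormsq (kf d f) [(RtoC 1, z); (Copp (RtoC 1), w)] <= C.
Proof.
  intros Hfi HN HNdef Hpp Hxp Hzp Hxi Hzeta Hg1 Hg2.
  set (w1 := Cinv (Cmult xi (Nx xi))). set (w2 := Cinv (Cmult zeta (Nx zeta))).
  assert (Hw1 : 0 < Re w1) by (apply Re_inv_pos; auto). assert (Hw2 : 0 < Re w2) by (apply Re_inv_pos; auto).
  assert (Hg1n : Cmult xi (Nx xi) <> RtoC 0) by (intro E; rewrite E in Hg1; rewrite re_RtoC in Hg1; lra).
  assert (Hg2n : Cmult zeta (Nx zeta) <> RtoC 0) by (intro E; rewrite E in Hg2; rewrite re_RtoC in Hg2; lra).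
  assert (Hx0 : xi <> RtoC 0) by (intro E; rewrite E, Cmod_0 in Hxi; lra).
  assert (Hz0 : zeta <> RtoC 0) by (intro E; rewrite E, Cmod_0 in Hzeta; lra).
  assert (Hn1 : Nx xi <> RtoC 0) by (intro E; apply Hg1n; rewrite E; ring).
  assert (Hn2 : Nx zeta <> RtoC 0) by (intro E; apply Hg2n; rewrite E; ring).
  set (D1 := Copp (Cmult xi w1)). set (D2 := Copp (Cmult zeta w2)).
  assert (HD1 : Cmult D1 (Nx xi) = Copp (RtoC 1)) by (unfold D1, w1; field; auto).
  assert (HD2 : Cmult D2 (Nx zeta) = Copp (RtoC 1)) by (unfold D2, w2; field; auto).
  assert (HNxi : N xi = RtoC 1).
  { rewrite HNdef, <- Hpp. unfold inner. apply csum_ext. intros i Hi. rewrite Hxp; auto. }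
  assert (HNzeta : N zeta = RtoC 1).
  { rewrite HNdef, <- Hpp. unfold inner. apply csum_ext. intros i Hi. rewrite Hzp; auto. }
  assert (Hcx : cudisc xi) by (unfold cudisc; lra). assert (Hcz : cudisc zeta) by (unfold cudisc; lra).
  destruct (taylor2 N Nx Ny Nxx Nxy Nyx Nyy xi D1 HN Hcx) as [K1 [HK1 [s1 [Hs1 HT1]]]].
  destruct (taylor2 N Nx Ny Nxx Nxy Nyx Nyy zeta D2 HN Hcz) as [K2 [HK2 [s2 [Hs2 HT2]]]].
  destruct (fin_unif (fun i L s0 => forall s, 0 < s <= s0 ->
      (udisc (Cplus xi (Cmult (RtoC s) D1)) -> Cmod (Cminus (f (Cplus xi (Cmult (RtoC s) D1)) i) (p i)) <= L * s) /\
      (udisc (Cplus zeta (Cmult (RtoC s) D2)) -> Cmod (Cminus (f (Cplus zeta (Cmult (RtoC s) D2)) i) (p i)) <= L * s)) d)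
    as [L [s4 [HL [Hs4 HP]]]].
  { intros i L L' s s' HP HLL Hss s'' Hs''. destruct (HP s'' ltac:(lra)) as [A1 A2]. split.
    - intros Hz. eapply Rle_trans. apply A1; auto. apply Rmult_le_compat_r; lra.
    - intros Hz. eapply Rle_trans. apply A2; auto. apply Rmult_le_compat_r; lra. }
  { intros i Hi. destruct (Hfi i Hi) as [gx [gy [gxx [gxy [gyx [gyy HG]]]]]].
    destruct (lip_from_taylor _ _ _ _ _ _ _ xi D1 HG Hcx) as [La [sa [HLa [Hsa HA]]]].
    destruct (lip_from_taylor _ _ _ _ _ _ _ zeta D2 HG Hcz) as [Lb [sb [HLb [Hsb HB]]]].
    exists (Rmax La Lb), (Rmin sa sb). split. eapply Rle_trans. exact HLa. apply Rmax_l. split. apply Rmin_pos; auto.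
    intros s Hs. split.
    - intros Hz. rewrite <- (Hxp i Hi). eapply Rle_trans. apply HA; auto. split. lra. eapply Rle_trans. apply Hs. apply Rmin_l.
      apply Rmult_le_compat_r. lra. apply Rmax_l.
    - intros Hz. rewrite <- (Hzp i Hi). eapply Rle_trans. apply HB; auto. split. lra. eapply Rle_trans. apply Hs. apply Rmin_r.
      apply Rmult_le_compat_r. lra. apply Rmax_r. }
  set (K := K1 + K2). assert (HK : 0 <= K) by (unfold K; lra).
  set (Cst := 2 * INR d * L ^ 2 + 2 * K).
  assert (Hd : 0 <= INR d) by apply pos_INR.
  assert (HCst : 0 <= Cst) by (unfold Cst; nra).
  exists (4 * Cst). intros delta Hdelta.
  assert (HwN1 : 0 < Cmod w1 ^ 2). { rewrite Cmod_sqr. nra. }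
  assert (HwN2 : 0 < Cmod w2 ^ 2). { rewrite Cmod_sqr. nra. }
  set (s5 := Rmin (Re w1 / (Cmod w1 ^ 2) / 2) (Re w2 / (Cmod w2 ^ 2) / 2)).
  assert (Hs5 : 0 < s5). { unfold s5. apply Rmin_pos; apply Rdiv_lt_0_compat; try lra; apply Rdiv_lt_0_compat; lra. }
  set (s6 := delta / (2 * (Cmod D1 + Cmod D2 + 1))).
  assert (HDD : 0 <= Cmod D1 + Cmod D2) by (pose proof (Cmod_ge_0 D1); pose proof (Cmod_ge_0 D2); lra).
  assert (Hs6 : 0 < s6) by (unfold s6; apply Rdiv_lt_0_compat; lra).
  set (s7 := / (4 * (Cst + 1))). assert (Hs7 : 0 < s7) by (unfold s7; apply Rinv_0_lt_compat; lra).
  set (s := Rmin (Rmin s1 s2) (Rmin (Rmin s4 s5) (Rmin s6 s7))).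
  assert (Hs : 0 < s).
  { unfold s. apply Rmin_pos; apply Rmin_pos. exact Hs1. exact Hs2. apply Rmin_pos. exact Hs4. exact Hs5.
    apply Rmin_pos. exact Hs6. exact Hs7. }
  assert (Hsa : s <= s1 /\ s <= s2 /\ s <= s4 /\ s <= s5 /\ s <= s6 /\ s <= s7).
  { unfold s. 
    pose proof (Rmin_l (Rmin s1 s2) (Rmin (Rmin s4 s5) (Rmin s6 s7))).
    pose proof (Rmin_r (Rmin s1 s2) (Rmin (Rmin s4 s5) (Rmin s6 s7))).
    pose proof (Rmin_l s1 s2). pose proof (Rmin_r s1 s2).
    pose proof (Rmin_l (Rmin s4 s5) (Rmin s6 s7)). pose proof (Rmin_r (Rmin s4 s5) (Rmin s6 s7)).
    pose proof (Rmin_l s4 s5). pose proof (Rmin_r s4 s5). pose proof (Rmin_l s6 s7). pose proof (Rmin_r s6 s7).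
    clear_body_all. lra. }
  destruct Hsa as [Ha1 [Ha2 [Ha4 [Ha5 [Ha6 Ha7]]]]].
  set (z := Cplus xi (Cmult (RtoC s) D1)). set (w := Cplus zeta (Cmult (RtoC s) D2)).
  assert (Hz : udisc z).
  { unfold z, D1. apply dir_in; auto. eapply Rle_trans. exact Ha5. apply Rmin_l. }
  assert (Hw : udisc w).
  { unfold w, D2. apply dir_in; auto. eapply Rle_trans. exact Ha5. apply Rmin_r. }
  exists z, w. split; auto. split; auto.
  assert (Hs6' : s * (2 * (Cmod D1 + Cmod D2 + 1)) <= delta).
  { apply Rmult_le_compat_r with (r := 2 * (Cmod D1 + Cmod D2 + 1)) in Ha6. 2: lra.
    unfold s6 in Ha6. replace (delta / (2 * (Cmod D1 + Cmod D2 + 1)) * (2 * (Cmod D1 + Cmod D2 + 1))) with delta in Ha6 by (field; lra). lra. }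
  split.
  { unfold z. replace (Cminus (Cplus xi (Cmult (RtoC s) D1)) xi) with (Cmult (RtoC s) D1) by ring.
    rewrite Cmod_RtoC_mult, Rabs_right by lra. pose proof (Cmod_ge_0 D1). pose proof (Cmod_ge_0 D2). nra. }
  split.
  { unfold w. replace (Cminus (Cplus zeta (Cmult (RtoC s) D2)) zeta) with (Cmult (RtoC s) D2) by ring.
    rewrite Cmod_RtoC_mult, Rabs_right by lra. pose proof (Cmod_ge_0 D1). pose proof (Cmod_ge_0 D2). nra. }
  rewrite knormsq_pair. unfold kf.
  specialize (HT1 s ltac:(lra) Hz). specialize (HT2 s ltac:(lra) Hw). fold z w in HT1, HT2.
  rewrite HNxi, HD1 in HT1. rewrite HNzeta, HD2 in HT2. rewrite !HNdef in HT1, HT2.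
  apply (pair_bound d (f z) (f w) p s L K Hs HL HK Hpp).
  - intros i Hi. apply (proj1 (HP i Hi s ltac:(lra))). exact Hz.
  - intros i Hi. apply (proj2 (HP i Hi s ltac:(lra))). exact Hw.
  - assert (E : Cminus (inner d (f z) p) (RtoC (1 - s)) = Cminus (Cminus (inner d (f z) p) (RtoC 1)) (Cmult (RtoC s) (Copp (RtoC 1)))) by (rewrite RtoC_minus; ring).
    rewrite E. eapply Rle_trans. exact HT1. apply Rmult_le_compat_r. nra. unfold K; lra.
  - assert (E : Cminus (inner d (f w) p) (RtoC (1 - s)) = Cminus (Cminus (inner d (f w) p) (RtoC 1)) (Cmult (RtoC s) (Copp (RtoC 1)))) by (rewrite RtoC_minus; ring).
    rewrite E. eapply Rle_trans. exact HT2. apply Rmult_le_compat_r. nra. unfold K; lra.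
  - unfold s7 in Ha7. assert (s * (4 * (Cst + 1)) <= 1).
    { apply Rmult_le_compat_r with (r := 4 * (Cst + 1)) in Ha7. 2: lra. rewrite Rinv_l in Ha7 by lra. lra. }
    unfold Cst in *. nra.
  - unfold s7 in Ha7. assert (s * (4 * (Cst + 1)) <= 1).
    { apply Rmult_le_compat_r with (r := 4 * (Cst + 1)) in Ha7. 2: lra. rewrite Rinv_l in Ha7 by lra. lra. }
    unfold Cst in *. nra.
Qed.


Lemma fin_cont d (f : CC -> nat -> CC) p x0 :
  (forall i, (i < d)%nat -> cont_on_cdisc (fun z => f z i)) -> cudisc x0 ->
  (forall i, (i < d)%nat -> f x0 i = p i) ->
  forall eps, 0 < eps -> exists delta, 0 < delta /\ forall i u, (i < d)%nat -> cudisc u -> Cmod (Cminus u x0) < delta ->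
    Cmod (Cminus (f u i) (p i)) < eps.
Proof.
  intros Hc Hx Hp eps He.
  destruct (fin_unif (fun i (L : R) dl => forall u, cudisc u -> Cmod (Cminus u x0) < dl -> Cmod (Cminus (f u i) (p i)) < eps) d)
    as [L [dl [_ [Hdl H]]]].
  { intros i L L' s s' HP _ Hs u Hu Hux. apply HP; auto. lra. }
  { intros i Hi. destruct (Hc i Hi x0 Hx eps He) as [dl [Hdl H]]. exists 0, dl. split. lra. split. auto.
    intros u Hu Hux. rewrite <- (Hp i Hi). apply H; auto. }
  exists dl. split. auto. intros i u Hi Hu Hux. apply H; auto.
Qed.

Lemma kcont d (f : CC -> nat -> CC) p xi zeta v :
  (forall i, (i < d)%nat -> cont_on_cdisc (fun z => f z i)) -> cudisc xi -> cudisc zeta ->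
  (forall i, (i < d)%nat -> f xi i = p i) -> (forall i, (i < d)%nat -> f zeta i = p i) ->
  vnorm d p <= 1 -> (forall x, udisc x -> vnorm d (f x) < 1) ->
  List.Forall (fun q => udisc (snd q)) v ->
  forall eta, 0 < eta -> exists delta, 0 < delta /\ forall z w, cudisc z -> cudisc w ->
    Cmod (Cminus z xi) < delta -> Cmod (Cminus w zeta) < delta ->
    Cmod (Cminus (keval (kf d f) v z) (keval (kf d f) v w)) < eta.
Proof.
  intros Hc Hxi Hze Hpx Hpz Hp Hf Hv.
  set (L := fun b => Cinv (Cminus (RtoC 1) (inner d p (f b)))).
  assert (Hterm : forall b, udisc b -> forall eta, 0 < eta -> exists delta, 0 < delta /\ forall u, cudisc u ->
       (Cmod (Cminus u xi) < delta \/ Cmod (Cminus u zeta) < delta) -> Cmod (Cminus (kf d f u b) (L b)) < eta).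
  { intros b Hb eta He. set (y := f b). set (a0 := inner d p y).
    assert (Ha0 : Cmod a0 < 1).
    { unfold a0. eapply Rle_lt_trans. apply inner_CS. pose proof (Hf b Hb). pose proof (vnorm_nonneg d p).
      pose proof (vnorm_nonneg d y). fold y in H. nra. }
    set (m := 1 - Cmod a0). assert (Hm : 0 < m) by (unfold m; lra).
    assert (H1a0 : m <= Cmod (Cminus (RtoC 1) a0)) by apply Cmod_1_minus.
    set (Y := rsum d (fun i => Cmod (y i))).
    assert (HY : 0 <= Y) by (apply rsum_nonneg; intros; apply Cmod_ge_0).
    set (e := Rmin (m / 2) (eta * m ^ 2 / 4) / (Y + 1)).
    assert (He0 : 0 < e). { unfold e. apply Rdiv_lt_0_compat. apply Rmin_pos. lra. assert (0 < m ^ 2) by nra.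
      apply Rdiv_lt_0_compat; nra. lra. }
    destruct (fin_cont d f p xi Hc Hxi Hpx e He0) as [d1 [Hd1 H1]].
    destruct (fin_cont d f p zeta Hc Hze Hpz e He0) as [d2 [Hd2 H2]].
    exists (Rmin d1 d2). split. apply Rmin_pos; auto. intros u Hu Hnear.
    assert (Hcl : forall i, (i < d)%nat -> Cmod (Cminus (f u i) (p i)) < e).
    { intros i Hi. destruct Hnear as [Hn|Hn]. apply H1; auto. eapply Rlt_le_trans. exact Hn. apply Rmin_l.
      apply H2; auto. eapply Rlt_le_trans. exact Hn. apply Rmin_r. }
    set (a := inner d (f u) y).
    assert (Haa : Cmod (Cminus a a0) <= e * Y).
    { unfold a, a0. rewrite <- inner_minus_l. eapply Rle_trans. apply inner_bound. unfold Y. rewrite <- rsum_scal.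
      apply rsum_le. intros i Hi. specialize (Hcl i Hi). pose proof (Cmod_ge_0 (y i)). cbv beta. nra. }
    assert (HeY : e * Y <= Rmin (m / 2) (eta * m ^ 2 / 4)).
    { unfold e. unfold Rdiv at 1. apply Rmult_le_reg_r with (Y + 1). lra.
      assert (0 < Rmin (m / 2) (eta * m ^ 2 / 4)) by (apply Rmin_pos; [lra| assert (0 < m ^ 2) by nra; apply Rdiv_lt_0_compat; nra]).
      replace (Rmin (m / 2) (eta * m ^ 2 / 4) * / (Y + 1) * Y * (Y + 1)) with (Rmin (m / 2) (eta * m ^ 2 / 4) * Y) by (field; lra).
      nra. }
    assert (Hm2 : e * Y <= m / 2) by (eapply Rle_trans; [exact HeY|apply Rmin_l]).
    assert (Hm3 : e * Y <= eta * m ^ 2 / 4) by (eapply Rle_trans; [exact HeY|apply Rmin_r]).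
    assert (H1a : m / 2 <= Cmod (Cminus (RtoC 1) a)).
    { assert (Cmod (Cminus (RtoC 1) a0) <= Cmod (Cminus (RtoC 1) a) + Cmod (Cminus a a0)).
      { replace (Cminus (RtoC 1) a0) with (Cplus (Cminus (RtoC 1) a) (Cminus a a0)) by ring. apply Cmod_triangle. }
      lra. }
    unfold kf, L. fold y. fold a. fold a0.
    rewrite Cinv_diff.
    2: { intro E. rewrite E, Cmod_0 in H1a. lra. }
    2: { intro E. rewrite E, Cmod_0 in H1a0. lra. }
    replace (Cminus (Cminus (RtoC 1) a0) (Cminus (RtoC 1) a)) with (Cminus a a0) by ring.
    assert (0 < Cmod (Cminus (RtoC 1) a) * Cmod (Cminus (RtoC 1) a0)) by nra.
    apply Rmult_lt_reg_r with (Cmod (Cminus (RtoC 1) a) * Cmod (Cminus (RtoC 1) a0)). auto.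
    unfold Rdiv. rewrite Rmult_assoc, Rinv_l by lra. rewrite Rmult_1_r.
    assert (m / 2 * m <= Cmod (Cminus (RtoC 1) a) * Cmod (Cminus (RtoC 1) a0)) by (apply Rmult_le_compat; lra).
    nra. }
  assert (Hsum : forall v, List.Forall (fun q => udisc (snd q)) v -> forall eta, 0 < eta -> exists delta, 0 < delta /\
     forall u, cudisc u -> (Cmod (Cminus u xi) < delta \/ Cmod (Cminus u zeta) < delta) ->
     Cmod (Cminus (keval (kf d f) v u) (lsum v (fun q => Cmult (fst q) (L (snd q))))) < eta).
  { intros v0 Hv0. induction Hv0 as [|q v0 Hq Hv0 IH]; intros eta He.
    - exists 1. split. lra. intros. rewrite keval_lsum, !lsum_nil. replace (Cminus (RtoC 0) (RtoC 0)) with (RtoC 0) by ring.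
      rewrite Cmod_0. auto.
    - destruct (IH (eta / 2) ltac:(lra)) as [d1 [Hd1 H1]].
      destruct (Hterm (snd q) Hq (eta / 2 / (Cmod (fst q) + 1))) as [d2 [Hd2 H2]].
      { apply Rdiv_lt_0_compat. lra. pose proof (Cmod_ge_0 (fst q)); lra. }
      exists (Rmin d1 d2). split. apply Rmin_pos; auto. intros u Hu Hn.
      rewrite keval_lsum, lsum_cons, lsum_cons. rewrite <- keval_lsum.
      replace (Cminus (Cplus (keval (kf d f) v0 u) (Cmult (fst q) (kf d f u (snd q))))
                      (Cplus (lsum v0 (fun q0 => Cmult (fst q0) (L (snd q0)))) (Cmult (fst q) (L (snd q)))))
        with (Cplus (Cminus (keval (kf d f) v0 u) (lsum v0 (fun q0 => Cmult (fst q0) (L (snd q0)))))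
                    (Cmult (fst q) (Cminus (kf d f u (snd q)) (L (snd q))))) by ring.
      eapply Rle_lt_trans. apply Cmod_triangle. rewrite Cmod_mult.
      assert (A1 : Cmod (Cminus (keval (kf d f) v0 u) (lsum v0 (fun q0 => Cmult (fst q0) (L (snd q0))))) < eta / 2).
      { apply H1; auto. destruct Hn as [Hn|Hn]; [left|right]; eapply Rlt_le_trans; eauto; apply Rmin_l. }
      assert (A2 : Cmod (Cminus (kf d f u (snd q)) (L (snd q))) < eta / 2 / (Cmod (fst q) + 1)).
      { apply H2; auto. destruct Hn as [Hn|Hn]; [left|right]; eapply Rlt_le_trans; eauto; apply Rmin_r. }
      pose proof (Cmod_ge_0 (fst q)).
      assert (Cmod (fst q) * Cmod (Cminus (kf d f u (snd q)) (L (snd q))) <= eta / 2).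
      { assert (Cmod (Cminus (kf d f u (snd q)) (L (snd q))) * (Cmod (fst q) + 1) < eta / 2).
        { apply Rmult_lt_compat_r with (r := Cmod (fst q) + 1) in A2. 2: lra.
          replace (eta / 2 / (Cmod (fst q) + 1) * (Cmod (fst q) + 1)) with (eta / 2) in A2 by (field; lra). lra. }
        pose proof (Cmod_ge_0 (Cminus (kf d f u (snd q)) (L (snd q)))). nra. }
      lra. }
  intros eta He. destruct (Hsum v Hv (eta / 2) ltac:(lra)) as [dl [Hdl H]].
  exists dl. split. auto. intros z w Hz Hw Hzx Hwz.
  assert (A := H z Hz (or_introl Hzx)). assert (B := H w Hw (or_intror Hwz)).
  set (S := lsum v (fun q => Cmult (fst q) (L (snd q)))) in *.
  replace (Cminus (keval (kf d f) v z) (keval (kf d f) v w)) with (Cminus (Cminus (keval (kf d f) v z) S) (Cminus (keval (kf d f) v w) S)) by ring.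
  unfold Cminus at 1. eapply Rle_lt_trans. apply Cmod_triangle. rewrite Cmod_opp. lra.
Qed.


Theorem theorem2p3 (d : nat) (V : (nat -> Complex.C) -> Prop) (f : Complex.C -> nat -> Complex.C)
  (HV : analytic_disc_attached d V f)
  (xi zeta : Complex.C) (Hxi : Cmod xi = 1) (Hzeta : Cmod zeta = 1) (Hne : xi <> zeta)
  (Hf : f xi = f zeta)
  (h : Complex.C -> Complex.C) (Hh : in_Hf d f h)
  (hbar : Complex.C -> Complex.C) (Hcont : cont_on_cdisc hbar)
  (Hext : forall z, udisc z -> hbar z = h z) :
  hbar xi = hbar zeta.
Proof.
  destruct HV as [_ [_ [Hball [_ [Hexd [_ [_ [HC2 Hbd]]]]]]]].
  set (p := f xi).
  assert (Hf1 : forall x, udisc x -> vnorm d (f x) < 1) by (intros x Hx; apply (Hball x Hx)).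
  assert (Hcx : cudisc xi) by (unfold cudisc; lra). assert (Hcz : cudisc zeta) by (unfold cudisc; lra).
  assert (Hvp : vnorm d p = 1) by (apply (Hbd xi Hcx); auto).
  assert (Hpp : inner d p p = RtoC 1).
  { rewrite inner_diag_real. rewrite <- vnorm_sq, Hvp. f_equal. ring. }
  assert (Hfi : forall i, (i < d)%nat -> exists gx gy gxx gxy gyx gyy, Good (fun z => f z i) gx gy gxx gxy gyx gyy).
  { intros i Hi. apply Good_of_hyp. intros x Hx. apply Hexd; auto. apply HC2; auto. }
  assert (Hci : forall i, (i < d)%nat -> cont_on_cdisc (fun z => f z i)).
  { intros i Hi. destruct (Hfi i Hi) as [gx [gy [gxx [gxy [gyx [gyy HG]]]]]]. apply HG. }
  destruct (Good_lincomb f (fun i => Cconj (p i)) d Hfi) as [Nx [Ny [Nxx [Nxy [Nyx [Nyy HN]]]]]].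
  set (N := fun z => csum d (fun i => Cmult (Cconj (p i)) (f z i))) in HN.
  assert (HNdef : forall z, N z = inner d (f z) p).
  { intros z. unfold N, inner. apply csum_ext. intros. ring. }
  assert (Hvf : forall z, cudisc z -> vnorm d (f z) <= 1).
  { intros z Hz. destruct (Rle_lt_or_eq_dec _ _ Hz) as [Hl|He]. left. apply Hf1. exact Hl.
    right. apply (Hbd z Hz). exact He. }
  assert (HReN : forall z, cudisc z -> Cmod (N z) <= vnorm d (f z)).
  { intros z Hz. rewrite HNdef. eapply Rle_trans. apply inner_CS. rewrite Hvp. lra. }
  assert (Hle : forall z, cudisc z -> Re (N z) <= 1).
  { intros z Hz. eapply Rle_trans. apply Rle_abs. eapply Rle_trans. apply re_le_Cmod. eapply Rle_trans. apply HReN; auto. apply Hvf; auto. }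
  assert (Hlt : forall z, udisc z -> Re (N z) < 1).
  { intros z Hz. eapply Rle_lt_trans. apply Rle_abs. eapply Rle_lt_trans. apply re_le_Cmod. eapply Rle_lt_trans. apply HReN.
    unfold udisc, cudisc in *; lra. apply Hf1; auto. }
  assert (HNxi : N xi = RtoC 1) by (rewrite HNdef; exact Hpp).
  assert (HNze : N zeta = RtoC 1) by (rewrite HNdef, <- Hf; exact Hpp).
  assert (Hg1 := hopf N Nx Ny Nxx Nxy Nyx Nyy xi HN Hxi HNxi Hle Hlt).
  assert (Hg2 := hopf N Nx Ny Nxx Nxy Nyx Nyy zeta HN Hzeta HNze Hle Hlt).
  assert (Hxp : forall i, (i < d)%nat -> f xi i = p i) by auto.
  assert (Hzp : forall i, (i < d)%nat -> f zeta i = p i) by (intros; unfold p; rewrite Hf; auto).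
  destruct (geo d f p xi zeta N Nx Ny Nxx Nxy Nyx Nyy Hfi HN HNdef Hpp Hxp Hzp Hxi Hzeta Hg1 Hg2) as [C0 HC0].
  destruct (rkhs_bound d f h Hf1 Hh) as [M [HM HMb]].
  destruct (classic (hbar xi = hbar zeta)) as [E|NE]; auto. exfalso.
  set (c := Cminus (hbar xi) (hbar zeta)).
  assert (Hc : 0 < Cmod c). { apply Cmod_gt_0. intro E. apply NE. apply Ceq_minus. exact E. }
  destruct (Hcont xi Hcx (Cmod c / 4) ltac:(lra)) as [dx [Hdx Hhx]].
  destruct (Hcont zeta Hcz (Cmod c / 4) ltac:(lra)) as [dz [Hdz Hhz]].
  set (C1 := Rmax C0 0).
  set (g := fun q : CC * CC => Cmult (Cconj (fst q)) (h (snd q))).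
  assert (Hpsd := psd_kf d f Hf1).
  assert (Claim : forall n : nat, exists v : kcomb CC, List.Forall (fun q => udisc (snd q)) v /\
      knormsq (kf d f) v <= INR n * (C1 + 2) /\ INR n * (Cmod c) ^ 2 / 2 <= Re (Cmult (Cconj c) (lsum v g))).
  { induction n.
    - exists []. split. constructor. split. rewrite knormsq_Bf. unfold Bf. rewrite lsum_nil. simpl. lra.
      rewrite lsum_nil. simpl. lra.
    - destruct IHn as [v [Hv [Hkn Hre]]].
      destruct (kcont d f p xi zeta v Hci Hcx Hcz Hxp Hzp ltac:(lra) Hf1 Hv 1 ltac:(lra)) as [dk [Hdk Hk]].
      destruct (HC0 (Rmin dk (Rmin dx dz)) ltac:(apply Rmin_pos; [lra|apply Rmin_pos; lra])) as [z [w [Hz [Hw [Hzx [Hwz Hkp]]]]]].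
      set (pr := [(RtoC 1, z); (Copp (RtoC 1), w)]) in *.
      exists (v ++ pr). split. apply List.Forall_app. split; auto. unfold pr. repeat constructor; auto.
      assert (Hzx1 : Cmod (Cminus z xi) < dk) by (eapply Rlt_le_trans; [exact Hzx|apply Rmin_l]).
      assert (Hzx2 : Cmod (Cminus z xi) < dx) by (eapply Rlt_le_trans; [exact Hzx|eapply Rle_trans; [apply Rmin_r|apply Rmin_l]]).
      assert (Hwz1 : Cmod (Cminus w zeta) < dk) by (eapply Rlt_le_trans; [exact Hwz|apply Rmin_l]).
      assert (Hwz2 : Cmod (Cminus w zeta) < dz) by (eapply Rlt_le_trans; [exact Hwz|eapply Rle_trans; [apply Rmin_r|apply Rmin_r]]).
      split.
      + rewrite knormsq_Bf, Bf_app_l, !Bf_app_r.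
        rewrite (Bf_herm (kf d f) v pr (kf_herm d f)).
        assert (HB : Bf (kf d f) v pr = Cminus (keval (kf d f) v z) (keval (kf d f) v w)).
        { rewrite Bf_keval. unfold pr. rewrite !lsum_cons, lsum_nil. simpl fst; simpl snd.
          replace (Cconj (RtoC 1)) with (RtoC 1) by cext. replace (Cconj (Copp (RtoC 1))) with (Copp (RtoC 1)) by cext. ring. }
        assert (HB1 : Cmod (Bf (kf d f) v pr) < 1).
        { rewrite HB. apply Hk; auto using udisc_cudisc. }
        rewrite knormsq_Bf in Hkn, Hkp.
        set (X := Bf (kf d f) v pr) in *.
        assert (Re (Cplus (Cplus (Bf (kf d f) v v) X) (Cplus (Cconj X) (Bf (kf d f) pr pr))) =
                Re (Bf (kf d f) v v) + 2 * Re X + Re (Bf (kf d f) pr pr)).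
        { destruct X. unfold Re; simpl. ring. }
        rewrite H. pose proof (re_le_Cmod X). pose proof (Rle_abs (Re X)).
        assert (Re (Bf (kf d f) pr pr) <= C1) by (eapply Rle_trans; [exact Hkp|apply Rmax_l]).
        rewrite S_INR. nra.
      + rewrite lsum_app. unfold pr. rewrite !lsum_cons, lsum_nil. unfold g at 2 3. simpl fst; simpl snd.
        rewrite <- (Hext z Hz), <- (Hext w Hw).
        replace (Cconj (RtoC 1)) with (RtoC 1) by cext. replace (Cconj (Copp (RtoC 1))) with (Copp (RtoC 1)) by cext.
        set (Y := Cminus (Cminus (hbar z) (hbar w)) c).
        assert (HY : Cmod Y < Cmod c / 2).
        { unfold Y. replace (Cminus (Cminus (hbar z) (hbar w)) c)
            with (Cminus (Cminus (hbar z) (hbar xi)) (Cminus (hbar w) (hbar zeta))) by (unfold c; ring).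
          unfold Cminus at 1. eapply Rle_lt_trans. apply Cmod_triangle. rewrite Cmod_opp.
          specialize (Hhx z (udisc_cudisc z Hz) Hzx2). specialize (Hhz w (udisc_cudisc w Hw) Hwz2). lra. }
        replace (Cmult (Cconj c) (Cplus (lsum v g) (Cplus (Cplus (RtoC 0) (Cmult (Copp (RtoC 1)) (hbar w))) (Cmult (RtoC 1) (hbar z)))))
          with (Cplus (Cmult (Cconj c) (lsum v g)) (Cplus (Cmult (Cconj c) c) (Cmult (Cconj c) Y))) by (unfold Y; ring).
        change (Re (Cplus (Cmult (Cconj c) (lsum v g)) (Cplus (Cmult (Cconj c) c) (Cmult (Cconj c) Y))))
          with (Re (Cmult (Cconj c) (lsum v g)) + (Re (Cmult (Cconj c) c) + Re (Cmult (Cconj c) Y))).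
        assert (E1 : Re (Cmult (Cconj c) c) = Cmod c ^ 2).
        { rewrite Cmult_comm, <- Cmod2_conj. rewrite re_RtoC. auto. }
        assert (E2 : - (Cmod c * Cmod Y) <= Re (Cmult (Cconj c) Y)).
        { assert (H1 := re_le_Cmod (Cmult (Cconj c) Y)). rewrite Cmod_mult, Cmod_conj in H1.
          apply Rabs_le_between in H1. lra. }
        rewrite S_INR. pose proof (Cmod_ge_0 Y). nra. }
  destruct (INR_archimed (Cmod c ^ 2) (4 * M ^ 2 * (C1 + 2)) ltac:(nra)) as [n Hn].
  destruct (Claim n) as [v [Hv [Hkn Hre]]].
  specialize (HMb v Hv). fold g in HMb.
  assert (HC1 : 0 <= C1) by apply Rmax_r.
  assert (Hn0 : 0 <= INR n) by apply pos_INR.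
  assert (A1 : Re (Cmult (Cconj c) (lsum v g)) <= Cmod c * Cmod (lsum v g)).
  { eapply Rle_trans. apply Rle_abs. eapply Rle_trans. apply re_le_Cmod. rewrite Cmod_mult, Cmod_conj. lra. }
  assert (A2 : sqrt (knormsq (kf d f) v) <= sqrt (INR n * (C1 + 2))) by (apply sqrt_le_1_alt; auto).
  assert (A3 : sqrt (INR n * (C1 + 2)) ^ 2 = INR n * (C1 + 2)) by (rewrite <- Rsqr_pow2; apply Rsqr_sqrt; nra).
  assert (A4 : INR n * Cmod c ^ 2 / 2 <= Cmod c * (M * sqrt (INR n * (C1 + 2)))).
  { eapply Rle_trans. exact Hre. eapply Rle_trans. exact A1. apply Rmult_le_compat_l. lra.
    eapply Rle_trans. exact HMb. apply Rmult_le_compat_l; auto. }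
  assert (A5 : INR n * Cmod c / 2 <= M * sqrt (INR n * (C1 + 2))).
  { apply Rmult_le_reg_l with (Cmod c). auto. nra. }
  assert (0 <= sqrt (INR n * (C1 + 2))) by apply sqrt_pos.
  assert (A6 : (INR n * Cmod c / 2) ^ 2 <= M ^ 2 * (INR n * (C1 + 2))).
  { rewrite <- A3. replace (M ^ 2 * sqrt (INR n * (C1 + 2)) ^ 2) with ((M * sqrt (INR n * (C1 + 2))) ^ 2) by ring.
    apply pow_incr. split. nra. auto. }
  assert (INR n > 0) by nra.
  nra.
Qed.
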